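(* Let $q=2^h$ with $h\not\equiv 2\pmod 4$, let $A,B,C,D\in\mathbb F_{q^4}$ with $B^{q^2+1}\neq 1$, and let $$\Lambda=\{(u,v)\in\mathbb F_{q^4}^2 : v^{q^2}+Au+Bv+u^q=0,\ v^{q^2}+u^{q^2}+v^q+Cu+Dv=0\}.$$ Then $\#\Lambda\le q^3$. *)

(* Defs.v *)
From HB Require Import structures.
From mathcomp Require Import all_boot all_order all_algebra all_field.
Set Implicit Arguments. Unset Strict Implicit. Unset Printing Implicit Defensive.
Import GRing.Theory.
Local Open Scope ring_scope.

Definition Lambda (F : finFieldType) (q : nat) (A B C D : F) : {set F * F} :=
  [set uv : F * F |
     (uv.2 ^+ (q ^ 2) + A * uv.1 + B * uv.2 + uv.1 ^+ q == 0) &&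
     (uv.2 ^+ (q ^ 2) + uv.1 ^+ (q ^ 2) + uv.2 ^+ q + C * uv.1 + D * uv.2 == 0)].

(* Main.v *)
Require Import Defs.
From HB Require Import structures.
From mathcomp Require Import all_boot all_order all_algebra all_field.
From mathcomp Require Import ring zify.
Import GRing.Theory.
Local Open Scope ring_scope.
Definition fr {F : comRingType} (h : nat) (x : F) := x ^+ (2 ^ h).

Lemma frD (F : comRingType) (h : nat) : 1 + 1 = 0 :> F -> forall x y : F, fr h (x + y) = fr h x + fr h y.
Proof.
move=> two; rewrite /fr; elim: h => [|h IH] x y; first by rewrite !expr1.
rewrite expnSr !exprM IH.
have E : forall a b : F, (a + b) ^+ 2 = a ^+ 2 + b ^+ 2 + (1 + 1) * (a * b) by move=> a b; ring.
by rewrite E two mul0r addr0.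
Qed.

Lemma frM (F : comRingType) (h : nat) (x y : F) : fr h (x * y) = fr h x * fr h y.
Proof. by rewrite /fr exprMn. Qed.

Lemma fr1 (F : comRingType) (h : nat) : fr h (1 : F) = 1.
Proof. by rewrite /fr expr1n. Qed.

Lemma fr0 (F : comRingType) (h : nat) : fr h (0 : F) = 0.
Proof. by rewrite /fr expr0n expn_eq0. Qed.

Lemma fr4 (F : finFieldType) (h : nat) : #|F| = ((2 ^ h) ^ 4)%N -> forall x : F, fr h (fr h (fr h (fr h x))) = x.
Proof.
move=> hF x; rewrite -[RHS](expf_card x) hF /fr -!exprM; congr (_ ^+ _);
  by rewrite !expnS expn0 muln1 !mulnA.
Qed.

Lemma frz (F : fieldType) (h : nat) (x : F) : fr h x = 0 -> x = 0.
Proof. by move/eqP; rewrite /fr expf_eq0 => /andP[_ /eqP]. Qed.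

Lemma frsq (F : comRingType) (h : nat) (x : F) : x ^+ ((2 ^ h) ^ 2) = fr h (fr h x).
Proof. by rewrite /fr -exprM mulnn. Qed.

Lemma c2eq (F : comRingType) (x y : F) : 1 + 1 = 0 :> F -> x + y = 0 -> x = y.
Proof.
move=> two e; have -> : x = (x + y) - y by ring.
rewrite e sub0r; have -> : - y = y - (1 + 1) * y by ring.
by rewrite two mul0r subr0.
Qed.

Lemma hcontra (F : comRingType) (h : nat) (K H : F) :
  (h %% 4 != 2)%N -> 1 + 1 = 0 :> F -> (1 : F) != 0 ->
  fr h K + K = 0 -> K * K + K + 1 = 0 -> fr h H + H + 1 = 0 -> H * H + H + K = 0 -> False.
Proof.
move=> hh two n1 eK K2 eH H2.
have sq : forall a b : F, (a + b) ^+ 2 = a ^+ 2 + b ^+ 2.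
  move=> a b; have -> : (a + b) ^+ 2 = a ^+ 2 + b ^+ 2 + (1 + 1) * (a * b) by ring.
  by rewrite two mul0r addr0.
have step : forall (x : F) (n : nat), x ^+ (2 ^ n.+1) = (x ^+ (2 ^ n)) ^+ 2 by move=> x n; rewrite expnSr exprM.
have K2' : K ^+ 2 = K + 1.
  by apply: c2eq => //; rewrite -K2; ring.
have K4 : forall m, K ^+ (2 ^ (2 * m)) = K /\ K ^+ (2 ^ (2 * m).+1) = K + 1.
  elim=> [|m [IH1 IH2]]; first by rewrite muln0 expr1 expn1.
  have e1 : K ^+ (2 ^ (2 * m.+1)) = K.
    rewrite mulnS addSn add1n step IH2 sq K2' expr1n.
    apply: c2eq => //; have -> : K + 1 + 1 + K = (1 + 1) * (K + 1) by ring.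
    by rewrite two mul0r.
  by rewrite step e1 K2'.
have H2' : H ^+ 2 = H + K by apply: c2eq => //; rewrite -H2; ring.
have H4 : H ^+ 4 = H + 1.
  have -> : (4 = 2 * 2)%N by [].
  rewrite exprM H2' sq H2' K2'.
  apply: c2eq => //; have -> : H + K + (K + 1) + (H + 1) = (1 + 1) * (H + K + 1) by ring.
  by rewrite two mul0r.
have p4 : forall x : F, x ^+ 4 = (x ^+ 2) ^+ 2 by move=> x; rewrite -exprM.
have H16' : H ^+ (2 ^ 4) = H.
  have -> : H ^+ (2 ^ 4) = (H ^+ 4) ^+ 4 by rewrite -exprM.
  rewrite H4 p4 sq expr1n sq expr1n -p4 H4.
  apply: c2eq => //; have -> : H + 1 + 1 + H = (1 + 1) * (H + 1) by ring.
  by rewrite two mul0r.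
have H16 : forall m, H ^+ (2 ^ (4 * m)) = H.
  elim=> [|m IH]; first by rewrite muln0 expr1.
  by rewrite mulnS expnD exprM H16' IH.
have c2x : forall x : F, x + x = 0.
  move=> x; have -> : x + x = (1 + 1) * x by ring.
  by rewrite two mul0r.
have hm := div.divn_eq h 4.
have : (h %% 4 < 4)%N by rewrite ltn_mod.
move: hh hm; case: (h %% 4)%N => [|[|[|[|r]]]] // _ hm _.
- move: eH; rewrite /fr hm addn0 mulnC H16 c2x add0r => e.
  by move: n1; rewrite e eqxx.
- move: eK; rewrite /fr hm.
  have -> : (h %/ 4 * 4 + 1 = (2 * (2 * (h %/ 4))).+1)%N by lia.
  case: (K4 (2 * (h %/ 4))%N) => _ ->.
  have -> : K + 1 + K = K + K + 1 by ring.
  by rewrite c2x add0r => e; move: n1; rewrite e eqxx.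
- move: eK; rewrite /fr hm.
  have -> : (h %/ 4 * 4 + 3 = (2 * (2 * (h %/ 4)).+1).+1)%N.
    by lia.
  case: (K4 (2 * (h %/ 4)).+1%N) => _ ->.
  have -> : K + 1 + K = K + K + 1 by ring.
  by rewrite c2x add0r => e; move: n1; rewrite e eqxx.
Qed.

Lemma bound (F : finFieldType) (h : nat) (S : {set F}) (c3 c2 c1 c0 : F) :
  (0 < h)%N -> ~~ [&& c3 == 0, c2 == 0, c1 == 0 & c0 == 0] ->
  (forall u, u \in S -> c3 * fr h (fr h (fr h u)) + c2 * fr h (fr h u) + c1 * fr h u + c0 * u = 0) ->
  (#|S| <= (2 ^ h) ^ 3)%N.
Proof.
move=> hpos nz hS.
set q := (2 ^ h)%N.
have q2 : (1 < q)%N by rewrite /q -{1}(expn0 2) ltn_exp2l.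
pose p : {poly F} := c3 *: 'X^(q^3) + c2 *: 'X^(q^2) + c1 *: 'X^(q^1) + c0 *: 'X^(q^0).
have ev : forall u, p.[u] = c3 * fr h (fr h (fr h u)) + c2 * fr h (fr h u) + c1 * fr h u + c0 * u.
  move=> u; rewrite /p !hornerE /fr -!exprM expn1.
  by rewrite !expnS expn0 !muln1 !mulnA.
have ne : forall a b, (a != b)%N -> (q ^ a == q ^ b)%N = false.
  by move=> a b ab; rewrite eqn_exp2l // (negbTE ab).
have cf : forall k, p`_(q ^ k) = [:: c0; c1; c2; c3]`_k * ((k < 4)%N)%:R.
  move=> k; rewrite /p !coefD !coefZ !coefXn.
  case: k => [|[|[|[|k]]]] /=;
  rewrite ?eqxx ?ne // ?mulr0 ?mulr1 ?addr0 ?add0r //.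
have pnz : p != 0.
  apply: contra nz => /eqP p0.
  have z : forall k, [:: c0; c1; c2; c3]`_k * ((k < 4)%N)%:R = 0.
    by move=> k; rewrite -cf p0 coef0.
  have := z 0%N; have := z 1%N; have := z 2%N; have := z 3%N.
  by rewrite /= !mulr1n !mulr1 => -> -> -> ->; rewrite eqxx.
have szp : (size p <= (q ^ 3).+1)%N.
{ have sz : forall n (c : F), (n <= q ^ 3)%N -> (size (c *: 'X^n) <= (q ^ 3).+1)%N.
    by move=> n c hn; apply: leq_trans (size_scale_leq _ _) _; rewrite size_polyXn ltnS.
  rewrite /p; do 3 (try (apply: leq_trans (size_polyD _ _) _; rewrite geq_max; apply/andP; split)).
  all: apply: sz; by rewrite leq_exp2l. }
have hr : all (root p) (enum S).
  by apply/allP => u; rewrite mem_enum => uS; rewrite /root ev (hS _ uS).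
have := max_poly_roots pnz hr (enum_uniq S); rewrite -cardE => lt.
by rewrite -ltnS; apply: leq_trans lt szp.
Qed.
Lemma S2_I0 (R : comRingType) (u0 u1 u2 u3 v0 v1 v2 v3 A0 A1 B0 B1 C0 C1 D0 D1 : R) :
  1 + 1 = 0 :> R ->
  v2 + A0*u0 + B0*v0 + u1 = 0 ->
  v2 + u2 + v1 + C0*u0 + D0*v0 = 0 ->
  v3 + A1*u1 + B1*v1 + u2 = 0 ->
  v3 + u3 + v2 + C1*u1 + D1*v1 = 0 ->
  ((B0 + D0)*(B1 + D1) + B0)*v0 + (1*u3 + (1 + (B1 + D1))*u2 + (1 + (A1 + C1) + (B1 + D1))*u1 + (A0 + (B1 + D1)*(A0 + C0))*u0) = 0.
Proof.
move=> two h0 h1 h2 h3.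
have E : ((B0 + D0)*(B1 + D1) + B0)*v0 + (1*u3 + (1 + (B1 + D1))*u2 + (1 + (A1 + C1) + (B1 + D1))*u1 + (A0 + (B1 + D1)*(A0 + C0))*u0) = (1 + (B1 + D1))*(v2 + A0*u0 + B0*v0 + u1) + ((B1 + D1))*(v2 + u2 + v1 + C0*u0 + D0*v0) + (1)*(v3 + A1*u1 + B1*v1 + u2) + (1)*(v3 + u3 + v2 + C1*u1 + D1*v1) + (1 + 1)*(-v3 + -v2 + -v2*D1 + -v2*B1 + -v1*D1 + -v1*B1) by ring.
by rewrite E h0 h1 h2 h3 two !(mulr0, mul0r, addr0).
Qed.

Lemma S2_Psi (R : comRingType) (u0 u1 u2 u3 v0 v1 v2 v3 A0 A1 A2 B0 B1 B2 C0 C1 C2 D0 D1 D2 : R) :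
  1 + 1 = 0 :> R ->
  v2 + A0*u0 + B0*v0 + u1 = 0 ->
  v2 + u2 + v1 + C0*u0 + D0*v0 = 0 ->
  v3 + A1*u1 + B1*v1 + u2 = 0 ->
  v3 + u3 + v2 + C1*u1 + D1*v1 = 0 ->
  v0 + A2*u2 + B2*v2 + u3 = 0 ->
  v0 + u0 + v3 + C2*u2 + D2*v2 = 0 ->
  (((B0 + D0)*(B1 + D1) + B0)*(1 + (B2 + D2)) + (B0 + D0)*((B1 + D1)*(B2 + D2) + B1))*u3 + (((B0 + D0)*(B1 + D1) + B0)*(1 + (A2 + C2) + (B2 + D2)) + (B0 + D0)*((B1 + D1)*(B2 + D2) + B1)*(1 + (B1 + D1)) + ((B0 + D0)*(B1 + D1) + B0)*((B1 + D1)*(B2 + D2) + B1))*u2 + (((B0 + D0)*(B1 + D1) + B0)*(A1 + (B2 + D2)*(A1 + C1)) + (B0 + D0)*((B1 + D1)*(B2 + D2) + B1)*(1 + (A1 + C1) + (B1 + D1)) + ((B0 + D0)*(B1 + D1) + B0)*((B1 + D1)*(B2 + D2) + B1))*u1 + (((B0 + D0)*(B1 + D1) + B0) + (B0 + D0)*((B1 + D1)*(B2 + D2) + B1)*(A0 + (B1 + D1)*(A0 + C0)) + ((B0 + D0)*(B1 + D1) + B0)*((B1 + D1)*(B2 + D2) + B1)*(A0 + C0))*u0 = 0.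
Proof.
move=> two h0 h1 h2 h3 h4 h5.
have E : (((B0 + D0)*(B1 + D1) + B0)*(1 + (B2 + D2)) + (B0 + D0)*((B1 + D1)*(B2 + D2) + B1))*u3 + (((B0 + D0)*(B1 + D1) + B0)*(1 + (A2 + C2) + (B2 + D2)) + (B0 + D0)*((B1 + D1)*(B2 + D2) + B1)*(1 + (B1 + D1)) + ((B0 + D0)*(B1 + D1) + B0)*((B1 + D1)*(B2 + D2) + B1))*u2 + (((B0 + D0)*(B1 + D1) + B0)*(A1 + (B2 + D2)*(A1 + C1)) + (B0 + D0)*((B1 + D1)*(B2 + D2) + B1)*(1 + (A1 + C1) + (B1 + D1)) + ((B0 + D0)*(B1 + D1) + B0)*((B1 + D1)*(B2 + D2) + B1))*u1 + (((B0 + D0)*(B1 + D1) + B0) + (B0 + D0)*((B1 + D1)*(B2 + D2) + B1)*(A0 + (B1 + D1)*(A0 + C0)) + ((B0 + D0)*(B1 + D1) + B0)*((B1 + D1)*(B2 + D2) + B1)*(A0 + C0))*u0 = ((B0 + D0)*((B1 + D1)*(B2 + D2) + B1)*(1 + (B1 + D1)) + ((B0 + D0)*(B1 + D1) + B0)*((B1 + D1)*(B2 + D2) + B1))*(v2 + A0*u0 + B0*v0 + u1) + ((B0 + D0)*((B1 + D1)*(B2 + D2) + B1)*(B1 + D1) + ((B0 + D0)*(B1 + D1) + B0)*((B1 + D1)*(B2 + D2) + B1))*(v2 + u2 + v1 + C0*u0 + D0*v0) + ((B0 + D0)*((B1 + D1)*(B2 + D2) + B1) + ((B0 + D0)*(B1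 + D1) + B0)*(1 + (B2 + D2)))*(v3 + A1*u1 + B1*v1 + u2) + ((B0 + D0)*((B1 + D1)*(B2 + D2) + B1) + ((B0 + D0)*(B1 + D1) + B0)*(B2 + D2))*(v3 + u3 + v2 + C1*u1 + D1*v1) + (((B0 + D0)*(B1 + D1) + B0))*(v0 + A2*u2 + B2*v2 + u3) + (((B0 + D0)*(B1 + D1) + B0))*(v0 + u0 + v3 + C2*u2 + D2*v2) + (1 + 1)*(-v3*D0*D1 + -(2%:R*v3*D0*D1*D2) + -(2%:R*v3*B2*D0*D1) + -(2%:R*v3*B1*D0) + -(2%:R*v3*B1*D0*D2) + -(2%:R*v3*B1*B2*D0) + -v3*B0 + -v3*B0*D2 + -v3*B0*D1 + -(2%:R*v3*B0*D1*D2) + -v3*B0*B2 + -(2%:R*v3*B0*B2*D1) + -(2%:R*v3*B0*B1) + -(2%:R*v3*B0*B1*D2) + -(2%:R*v3*B0*B1*B2) + -(2%:R*v2*D0*D1*D2) + -(2%:R*v2*D0*D1*D1*D2) + -(2%:R*v2*B2*D0*D1) + -(2%:R*v2*B2*D0*D1*D1) + -v2*B1*D0 + -(2%:R*v2*B1*D0*D2) + -(2%:R*v2*B1*D0*D1) + -(4%:R*v2*B1*D0*D1*D2) + -(2%:R*v2*B1*B2*D0) + -(4%:R*v2*B1*B2*D0*D1) + -(2%:R*v2*B1*B1*D0) + -(2%:R*v2*B1*B1*D0*D2) + -(2%:R*v2*B1*B1*B2*D0) + -v2*B0*D2 + -(3%:R*v2*B0*D1*D2) + -(2%:R*v2*B0*D1*D1*D2)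 + -v2*B0*B2 + -(3%:R*v2*B0*B2*D1) + -(2%:R*v2*B0*B2*D1*D1) + -(2%:R*v2*B0*B1) + -(3%:R*v2*B0*B1*D2) + -(2%:R*v2*B0*B1*D1) + -(4%:R*v2*B0*B1*D1*D2) + -(3%:R*v2*B0*B1*B2) + -(4%:R*v2*B0*B1*B2*D1) + -(2%:R*v2*B0*B1*B1) + -(2%:R*v2*B0*B1*B1*D2) + -(2%:R*v2*B0*B1*B1*B2) + -(2%:R*v1*D0*D1*D1*D2) + -(2%:R*v1*B2*D0*D1*D1) + -(2%:R*v1*B1*D0*D1) + -(4%:R*v1*B1*D0*D1*D2) + -(4%:R*v1*B1*B2*D0*D1) + -(2%:R*v1*B1*B1*D0) + -(2%:R*v1*B1*B1*D0*D2) + -(2%:R*v1*B1*B1*B2*D0) + -v1*B0*D1*D2 + -(2%:R*v1*B0*D1*D1*D2) + -v1*B0*B2*D1 + -(2%:R*v1*B0*B2*D1*D1) + -v1*B0*B1 + -v1*B0*B1*D2 + -(2%:R*v1*B0*B1*D1) + -(4%:R*v1*B0*B1*D1*D2) + -v1*B0*B1*B2 + -(4%:R*v1*B0*B1*B2*D1) + -(2%:R*v1*B0*B1*B1) + -(2%:R*v1*B0*B1*B1*D2) + -(2%:R*v1*B0*B1*B1*B2) + -v0*D0*D1 + -v0*D0*D0*D1*D1*D2 + -v0*B2*D0*D0*D1*D1 + -v0*B1*D0 + -v0*B1*D0*D0*D1 + -(2%:R*v0*B1*D0*D0*D1*D2) + -(2%:R*v0*B1*B2*D0*D0*D1) + -v0*B1*B1*D0*D0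 + -v0*B1*B1*D0*D0*D2 + -v0*B1*B1*B2*D0*D0 + -v0*B0 + -v0*B0*D1 + -v0*B0*D0*D1*D2 + -(2%:R*v0*B0*D0*D1*D1*D2) + -v0*B0*B2*D0*D1 + -(2%:R*v0*B0*B2*D0*D1*D1) + -v0*B0*B1 + -v0*B0*B1*D0 + -v0*B0*B1*D0*D2 + -(2%:R*v0*B0*B1*D0*D1) + -(4%:R*v0*B0*B1*D0*D1*D2) + -v0*B0*B1*B2*D0 + -(4%:R*v0*B0*B1*B2*D0*D1) + -(2%:R*v0*B0*B1*B1*D0) + -(2%:R*v0*B0*B1*B1*D0*D2) + -(2%:R*v0*B0*B1*B1*B2*D0) + -v0*B0*B0*D1*D2 + -v0*B0*B0*D1*D1*D2 + -v0*B0*B0*B2*D1 + -v0*B0*B0*B2*D1*D1 + -v0*B0*B0*B1 + -v0*B0*B0*B1*D2 + -v0*B0*B0*B1*D1 + -(2%:R*v0*B0*B0*B1*D1*D2) + -v0*B0*B0*B1*B2 + -(2%:R*v0*B0*B0*B1*B2*D1) + -v0*B0*B0*B1*B1 + -v0*B0*B0*B1*B1*D2 + -v0*B0*B0*B1*B1*B2) by ring.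
by rewrite E h0 h1 h2 h3 h4 h5 two !(mulr0, mul0r, addr0).
Qed.

Lemma Da (R : comRingType) (A1 A2 B0 B1 B2 C1 C2 D0 D1 D2 t0 : R) :
  1 + 1 = 0 :> R ->
  (((B0 + D0)*(B1 + D1) + B0)*(A1 + (B2 + D2)*(A1 + C1)) + (B0 + D0)*((B1 + D1)*(B2 + D2) + B1)*(1 + (A1 + C1) + (B1 + D1)) + ((B0 + D0)*(B1 + D1) + B0)*((B1 + D1)*(B2 + D2) + B1)) = 0 ->
  (((B0 + D0)*(B1 + D1) + B0)*(1 + (A2 + C2) + (B2 + D2)) + (B0 + D0)*((B1 + D1)*(B2 + D2) + B1)*(1 + (B1 + D1)) + ((B0 + D0)*(B1 + D1) + B0)*((B1 + D1)*(B2 + D2) + B1)) = 0 ->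
  (((B0 + D0)*(B1 + D1) + B0)*(1 + (B2 + D2)) + (B0 + D0)*((B1 + D1)*(B2 + D2) + B1)) = 0 ->
  t0*((B0 + D0)*(B1 + D1) + B0) + 1 = 0 ->
  A1 + 1 + (A2 + C2) + (B2 + D2) + (A1 + C1) = 0.
Proof.
move=> two h0 h1 h2 h3.
have E : A1 + 1 + (A2 + C2) + (B2 + D2) + (A1 + C1) = (t0)*((((B0 + D0)*(B1 + D1) + B0)*(A1 + (B2 + D2)*(A1 + C1)) + (B0 + D0)*((B1 + D1)*(B2 + D2) + B1)*(1 + (A1 + C1) + (B1 + D1)) + ((B0 + D0)*(B1 + D1) + B0)*((B1 + D1)*(B2 + D2) + B1))) + (t0)*((((B0 + D0)*(B1 + D1) + B0)*(1 + (A2 + C2) + (B2 + D2)) + (B0 + D0)*((B1 + D1)*(B2 + D2) + B1)*(1 + (B1 + D1)) + ((B0 + D0)*(B1 + D1) + B0)*((B1 + D1)*(B2 + D2) + B1))) + (t0*((1 + (A1 + C1) + (B1 + D1)) + (1 + (B1 + D1))))*((((B0 + D0)*(B1 + D1) + B0)*(1 + (B2 + D2)) + (B0 + D0)*((B1 + D1)*(B2 + D2) + B1))) + (A1 + 1 + (A2 + C2) + (B2 + D2) + (A1 + C1))*(t0*((B0 + D0)*(B1 + D1) + B0) + 1) + (1 + 1)*(-(2%:R*D0*D1*t0) + -(4%:R*D0*D1*D2*t0) + -D0*D1*D1*t0 + -(4%:R*D0*D1*D1*D2*t0) + -C2*D0*D1*t0 + -C1*D0*D1*t0 + -(2%:R*C1*D0*D1*D2*t0)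 + -(4%:R*B2*D0*D1*t0) + -(4%:R*B2*D0*D1*D1*t0) + -(2%:R*B2*C1*D0*D1*t0) + -(4%:R*B1*D0*t0) + -(4%:R*B1*D0*D2*t0) + -(5%:R*B1*D0*D1*t0) + -(8%:R*B1*D0*D1*D2*t0) + -B1*C2*D0*t0 + -(2%:R*B1*C1*D0*t0) + -(2%:R*B1*C1*D0*D2*t0) + -(4%:R*B1*B2*D0*t0) + -(8%:R*B1*B2*D0*D1*t0) + -(2%:R*B1*B2*C1*D0*t0) + -(4%:R*B1*B1*D0*t0) + -(4%:R*B1*B1*D0*D2*t0) + -(4%:R*B1*B1*B2*D0*t0) + -(2%:R*B0*t0) + -(2%:R*B0*D2*t0) + -(3%:R*B0*D1*t0) + -(6%:R*B0*D1*D2*t0) + -B0*D1*D1*t0 + -(4%:R*B0*D1*D1*D2*t0) + -B0*C2*t0 + -B0*C2*D1*t0 + -B0*C1*t0 + -B0*C1*D2*t0 + -B0*C1*D1*t0 + -(2%:R*B0*C1*D1*D2*t0) + -(2%:R*B0*B2*t0) + -(6%:R*B0*B2*D1*t0) + -(4%:R*B0*B2*D1*D1*t0) + -B0*B2*C1*t0 + -(2%:R*B0*B2*C1*D1*t0) + -(6%:R*B0*B1*t0) + -(6%:R*B0*B1*D2*t0) + -(5%:R*B0*B1*D1*t0) + -(8%:R*B0*B1*D1*D2*t0) + -B0*B1*C2*t0 + -(2%:R*B0*B1*C1*t0) + -(2%:R*B0*B1*C1*D2*t0) + -(6%:R*B0*B1*B2*t0) + -(8%:R*B0*B1*B2*D1*t0)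 + -(2%:R*B0*B1*B2*C1*t0) + -(4%:R*B0*B1*B1*t0) + -(4%:R*B0*B1*B1*D2*t0) + -(4%:R*B0*B1*B1*B2*t0) + -A2*D0*D1*t0 + -A2*B1*D0*t0 + -A2*B0*t0 + -A2*B0*D1*t0 + -A2*B0*B1*t0 + -(2%:R*A1*D0*D1*t0) + -(2%:R*A1*D0*D1*D2*t0) + -(2%:R*A1*B2*D0*D1*t0) + -(3%:R*A1*B1*D0*t0) + -(2%:R*A1*B1*D0*D2*t0) + -(2%:R*A1*B1*B2*D0*t0) + -(2%:R*A1*B0*t0) + -A1*B0*D2*t0 + -(2%:R*A1*B0*D1*t0) + -(2%:R*A1*B0*D1*D2*t0) + -A1*B0*B2*t0 + -(2%:R*A1*B0*B2*D1*t0) + -(3%:R*A1*B0*B1*t0) + -(2%:R*A1*B0*B1*D2*t0) + -(2%:R*A1*B0*B1*B2*t0)) by ring.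
by rewrite E h0 h1 h2 h3 two !(mulr0, mul0r, addr0).
Qed.

Lemma Db (R : comRingType) (A2 B0 B1 B2 C2 D0 D1 D2 t0 : R) :
  1 + 1 = 0 :> R ->
  (((B0 + D0)*(B1 + D1) + B0)*(1 + (A2 + C2) + (B2 + D2)) + (B0 + D0)*((B1 + D1)*(B2 + D2) + B1)*(1 + (B1 + D1)) + ((B0 + D0)*(B1 + D1) + B0)*((B1 + D1)*(B2 + D2) + B1)) = 0 ->
  (((B0 + D0)*(B1 + D1) + B0)*(1 + (B2 + D2)) + (B0 + D0)*((B1 + D1)*(B2 + D2) + B1)) = 0 ->
  t0*((B0 + D0)*(B1 + D1) + B0) + 1 = 0 ->
  B1 + (A2 + C2) + (B1 + D1) = 0.
Proof.
move=> two h0 h1 h2.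
have E : B1 + (A2 + C2) + (B1 + D1) = (t0)*((((B0 + D0)*(B1 + D1) + B0)*(1 + (A2 + C2) + (B2 + D2)) + (B0 + D0)*((B1 + D1)*(B2 + D2) + B1)*(1 + (B1 + D1)) + ((B0 + D0)*(B1 + D1) + B0)*((B1 + D1)*(B2 + D2) + B1))) + (t0*(1 + (B1 + D1)))*((((B0 + D0)*(B1 + D1) + B0)*(1 + (B2 + D2)) + (B0 + D0)*((B1 + D1)*(B2 + D2) + B1))) + (B1 + (A2 + C2) + (B1 + D1))*(t0*((B0 + D0)*(B1 + D1) + B0) + 1) + (1 + 1)*(-D0*D1*t0 + -(2%:R*D0*D1*D2*t0) + -D0*D1*D1*t0 + -(2%:R*D0*D1*D1*D2*t0) + -C2*D0*D1*t0 + -(2%:R*B2*D0*D1*t0) + -(2%:R*B2*D0*D1*D1*t0) + -(2%:R*B1*D0*t0) + -(2%:R*B1*D0*D2*t0) + -(4%:R*B1*D0*D1*t0) + -(4%:R*B1*D0*D1*D2*t0) + -B1*C2*D0*t0 + -(2%:R*B1*B2*D0*t0) + -(4%:R*B1*B2*D0*D1*t0) + -(3%:R*B1*B1*D0*t0) + -(2%:R*B1*B1*D0*D2*t0) + -(2%:R*B1*B1*B2*D0*t0) + -B0*t0 + -B0*D2*t0 + -(2%:R*B0*D1*t0) + -(3%:R*B0*D1*D2*t0) + -B0*D1*D1*t0 + -(2%:R*B0*D1*D1*D2*t0) + -B0*C2*t0 + -B0*C2*D1*t0 + -B0*B2*t0 + -(3%:R*B0*B2*D1*t0) + -(2%:R*B0*B2*D1*D1*t0)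 + -(4%:R*B0*B1*t0) + -(3%:R*B0*B1*D2*t0) + -(4%:R*B0*B1*D1*t0) + -(4%:R*B0*B1*D1*D2*t0) + -B0*B1*C2*t0 + -(3%:R*B0*B1*B2*t0) + -(4%:R*B0*B1*B2*D1*t0) + -(3%:R*B0*B1*B1*t0) + -(2%:R*B0*B1*B1*D2*t0) + -(2%:R*B0*B1*B1*B2*t0) + -A2*D0*D1*t0 + -A2*B1*D0*t0 + -A2*B0*t0 + -A2*B0*D1*t0 + -A2*B0*B1*t0) by ring.
by rewrite E h0 h1 h2 two !(mulr0, mul0r, addr0).
Qed.

Lemma Dd (R : comRingType) (A0 B0 B1 B2 C0 D0 D1 D2 t0 : R) :
  1 + 1 = 0 :> R ->
  (((B0 + D0)*(B1 + D1) + B0) + (B0 + D0)*((B1 + D1)*(B2 + D2) + B1)*(A0 + (B1 + D1)*(A0 + C0)) + ((B0 + D0)*(B1 + D1) + B0)*((B1 + D1)*(B2 + D2) + B1)*(A0 + C0)) = 0 ->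
  (((B0 + D0)*(B1 + D1) + B0)*(1 + (B2 + D2)) + (B0 + D0)*((B1 + D1)*(B2 + D2) + B1)) = 0 ->
  t0*((B0 + D0)*(B1 + D1) + B0) + 1 = 0 ->
  1 + (1 + (B2 + D2))*(A0 + (B1 + D1)*(A0 + C0)) + ((B1 + D1)*(B2 + D2) + B1)*(A0 + C0) = 0.
Proof.
move=> two h0 h1 h2.
have E : 1 + (1 + (B2 + D2))*(A0 + (B1 + D1)*(A0 + C0)) + ((B1 + D1)*(B2 + D2) + B1)*(A0 + C0) = (t0)*((((B0 + D0)*(B1 + D1) + B0) + (B0 + D0)*((B1 + D1)*(B2 + D2) + B1)*(A0 + (B1 + D1)*(A0 + C0)) + ((B0 + D0)*(B1 + D1) + B0)*((B1 + D1)*(B2 + D2) + B1)*(A0 + C0))) + (t0*(A0 + (B1 + D1)*(A0 + C0)))*((((B0 + D0)*(B1 + D1) + B0)*(1 + (B2 + D2)) + (B0 + D0)*((B1 + D1)*(B2 + D2) + B1))) + (1 + (1 + (B2 + D2))*(A0 + (B1 + D1)*(A0 + C0)) + ((B1 + D1)*(B2 + D2) + B1)*(A0 + C0))*(t0*((B0 + D0)*(B1 + D1) + B0) + 1) + (1 + 1)*(-D0*D1*t0 + -C0*D0*D1*D1*t0 + -(3%:R*C0*D0*D1*D1*D2*t0) + -(3%:R*B2*C0*D0*D1*D1*t0) + -B1*D0*t0 + -(4%:R*B1*C0*D0*D1*t0) + -(6%:R*B1*C0*D0*D1*D2*t0) + -(6%:R*B1*B2*C0*D0*D1*t0) + -(3%:R*B1*B1*C0*D0*t0)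 + -(3%:R*B1*B1*C0*D0*D2*t0) + -(3%:R*B1*B1*B2*C0*D0*t0) + -B0*t0 + -B0*D1*t0 + -B0*C0*D1*t0 + -(2%:R*B0*C0*D1*D2*t0) + -B0*C0*D1*D1*t0 + -(3%:R*B0*C0*D1*D1*D2*t0) + -(2%:R*B0*B2*C0*D1*t0) + -(3%:R*B0*B2*C0*D1*D1*t0) + -B0*B1*t0 + -(2%:R*B0*B1*C0*t0) + -(2%:R*B0*B1*C0*D2*t0) + -(4%:R*B0*B1*C0*D1*t0) + -(6%:R*B0*B1*C0*D1*D2*t0) + -(2%:R*B0*B1*B2*C0*t0) + -(6%:R*B0*B1*B2*C0*D1*t0) + -(3%:R*B0*B1*B1*C0*t0) + -(3%:R*B0*B1*B1*C0*D2*t0) + -(3%:R*B0*B1*B1*B2*C0*t0) + -A0*D0*D1*t0 + -(2%:R*A0*D0*D1*D2*t0) + -A0*D0*D1*D1*t0 + -(3%:R*A0*D0*D1*D1*D2*t0) + -(2%:R*A0*B2*D0*D1*t0) + -(3%:R*A0*B2*D0*D1*D1*t0) + -(2%:R*A0*B1*D0*t0) + -(2%:R*A0*B1*D0*D2*t0) + -(4%:R*A0*B1*D0*D1*t0) + -(6%:R*A0*B1*D0*D1*D2*t0) + -(2%:R*A0*B1*B2*D0*t0) + -(6%:R*A0*B1*B2*D0*D1*t0) + -(3%:R*A0*B1*B1*D0*t0) + -(3%:R*A0*B1*B1*D0*D2*t0) + -(3%:R*A0*B1*B1*B2*D0*t0) + -A0*B0*t0 + -A0*B0*D2*t0 + -(2%:R*A0*B0*D1*t0)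 + -(4%:R*A0*B0*D1*D2*t0) + -A0*B0*D1*D1*t0 + -(3%:R*A0*B0*D1*D1*D2*t0) + -A0*B0*B2*t0 + -(4%:R*A0*B0*B2*D1*t0) + -(3%:R*A0*B0*B2*D1*D1*t0) + -(4%:R*A0*B0*B1*t0) + -(4%:R*A0*B0*B1*D2*t0) + -(4%:R*A0*B0*B1*D1*t0) + -(6%:R*A0*B0*B1*D1*D2*t0) + -(4%:R*A0*B0*B1*B2*t0) + -(6%:R*A0*B0*B1*B2*D1*t0) + -(3%:R*A0*B0*B1*B1*t0) + -(3%:R*A0*B0*B1*B1*D2*t0) + -(3%:R*A0*B0*B1*B1*B2*t0)) by ring.
by rewrite E h0 h1 h2 two !(mulr0, mul0r, addr0).
Qed.

Lemma DE1 (R : comRingType) (A1 A2 B0 B1 B2 C1 C2 D0 D1 D2 : R) :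
  1 + 1 = 0 :> R ->
  (((B0 + D0)*(B1 + D1) + B0)*(1 + (B2 + D2)) + (B0 + D0)*((B1 + D1)*(B2 + D2) + B1)) = 0 ->
  B0 + (A1 + C1) + (B0 + D0) = 0 ->
  B1 + (A2 + C2) + (B1 + D1) = 0 ->
  (1 + (B2 + D2))*((B0 + D0)*(B1 + D1) + (A1 + C1) + (B0 + D0)) + (B0 + D0)*((B1 + D1)*(B2 + D2) + (A2 + C2) + (B1 + D1)) = 0.
Proof.
move=> two h0 h1 h2.
have E : (1 + (B2 + D2))*((B0 + D0)*(B1 + D1) + (A1 + C1) + (B0 + D0)) + (B0 + D0)*((B1 + D1)*(B2 + D2) + (A2 + C2) + (B1 + D1)) = (1)*((((B0 + D0)*(B1 + D1) + B0)*(1 + (B2 + D2)) + (B0 + D0)*((B1 + D1)*(B2 + D2) + B1))) + ((1 + (B2 + D2)))*(B0 + (A1 + C1) + (B0 + D0)) + ((B0 + D0))*(B1 + (A2 + C2) + (B1 + D1)) + (1 + 1)*(-B1*D0 + -B0 + -B0*D2 + -B0*B2 + -B0*B1) by ring.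
by rewrite E h0 h1 h2 two !(mulr0, mul0r, addr0).
Qed.

Lemma DE2 (R : comRingType) (A0 A1 A2 B1 B2 C0 C1 C2 D1 D2 : R) :
  1 + 1 = 0 :> R ->
  1 + (1 + (B2 + D2))*(A0 + (B1 + D1)*(A0 + C0)) + ((B1 + D1)*(B2 + D2) + B1)*(A0 + C0) = 0 ->
  A0 + 1 + (A1 + C1) + (B1 + D1) + (A0 + C0) = 0 ->
  B1 + (A2 + C2) + (B1 + D1) = 0 ->
  1 + (1 + (B2 + D2))*((1 + (A1 + C1) + (B1 + D1) + (A0 + C0)) + (B1 + D1)*(A0 + C0)) + ((B1 + D1)*(B2 + D2) + (A2 + C2) + (B1 + D1))*(A0 + C0) = 0.
Proof.
move=> two h0 h1 h2.
have E : 1 + (1 + (B2 + D2))*((1 + (A1 + C1) + (B1 + D1) + (A0 + C0)) + (B1 + D1)*(A0 + C0)) + ((B1 + D1)*(B2 + D2) + (A2 + C2) + (B1 + D1))*(A0 + C0) = (1)*(1 + (1 + (B2 + D2))*(A0 + (B1 + D1)*(A0 + C0)) + ((B1 + D1)*(B2 + D2) + B1)*(A0 + C0)) + ((1 + (B2 + D2)))*(A0 + 1 + (A1 + C1) + (B1 + D1) + (A0 + C0)) + ((A0 + C0))*(B1 + (A2 + C2) + (B1 + D1)) + (1 + 1)*(-B1*C0 + -A0 + -A0*D2 + -A0*B2 + -A0*B1) by ring.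
by rewrite E h0 h1 h2 two !(mulr0, mul0r, addr0).
Qed.

Lemma Dtk (R : comRingType) (A1 B0 B1 C1 D0 D1 t0 : R) :
  1 + 1 = 0 :> R ->
  t0*((B0 + D0)*(B1 + D1) + B0) + 1 = 0 ->
  B0 + (A1 + C1) + (B0 + D0) = 0 ->
  t0*((B0 + D0)*(B1 + D1) + (A1 + C1) + (B0 + D0)) + 1 = 0.
Proof.
move=> two h0 h1.
have E : t0*((B0 + D0)*(B1 + D1) + (A1 + C1) + (B0 + D0)) + 1 = (1)*(t0*((B0 + D0)*(B1 + D1) + B0) + 1) + (t0)*(B0 + (A1 + C1) + (B0 + D0)) + (1 + 1)*(-B0*t0) by ring.
by rewrite E h0 h1 two !(mulr0, mul0r, addr0).
Qed.

Lemma G2a (R : comRingType) (t0 P0 P1 P2 P3 Q0 Q1 Q2 Q3 : R) :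
  1 + 1 = 0 :> R ->
  (1 + P2)*(P0*P1 + Q1 + P0) + P0*(P1*P2 + Q2 + P1) = 0 ->
  (1 + P3)*(P1*P2 + Q2 + P1) + P1*(P2*P3 + Q3 + P2) = 0 ->
  (1 + P0)*(P2*P3 + Q3 + P2) + P2*(P3*P0 + Q0 + P3) = 0 ->
  (1 + P1)*(P3*P0 + Q0 + P3) + P3*(P0*P1 + Q1 + P0) = 0 ->
  1 + (1 + P2)*((1 + Q1 + P1 + Q0) + P1*Q0) + (P1*P2 + Q2 + P1)*Q0 = 0 ->
  1 + (1 + P3)*((1 + Q2 + P2 + Q1) + P2*Q1) + (P2*P3 + Q3 + P2)*Q1 = 0 ->
  1 + (1 + P0)*((1 + Q3 + P3 + Q2) + P3*Q2) + (P3*P0 + Q0 + P3)*Q2 = 0 ->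
  1 + (1 + P1)*((1 + Q0 + P0 + Q3) + P0*Q3) + (P0*P1 + Q1 + P0)*Q3 = 0 ->
  t0*(P0*P1 + Q1 + P0) + 1 = 0 ->
  Q1 + Q0 = 0.
Proof.
move=> two h0 h1 h2 h3 h4 h5 h6 h7 h8.
have E : Q1 + Q0 = (t0 + t0*Q3 + t0*Q0 + t0*P3 + t0*t0*Q3 + t0*t0*Q3*Q3 + t0*t0*Q1 + t0*t0*Q1*Q3 + t0*t0*Q0 + t0*t0*Q0*Q3 + t0*t0*Q0*Q0 + t0*t0*Q0*Q0*Q3 + t0*t0*P3*Q3 + t0*t0*P3*Q1 + t0*t0*P3*Q0*Q3 + t0*t0*P3*Q0*Q1 + t0*t0*P1*Q0 + t0*t0*P1*Q0*Q3 + t0*t0*P0 + t0*t0*P0*Q3*Q3 + t0*t0*P0*Q1*Q3 + t0*t0*P0*Q0 + t0*t0*P0*P3*Q3 + t0*t0*P0*P3*Q1 + t0*t0*P0*P1)*((1 + P2)*(P0*P1 + Q1 + P0) + P0*(P1*P2 + Q2 + P1)) + (t0 + t0*Q2 + t0*P2 + t0*t0*Q2*Q3 + t0*t0*Q1*Q2 + t0*t0*Q0*Q3 + t0*t0*Q0*Q2 + t0*t0*Q0*Q1*Q3 + t0*t0*Q0*Q1*Q2 + t0*t0*Q0*Q0 + t0*t0*Q0*Q0*Q1 + t0*t0*P2*Q3 + t0*t0*P2*Q1 + t0*t0*P2*Q0 + t0*t0*P2*Q0*Q1 + t0*t0*P0*Q3 + t0*t0*P0*Q2 + t0*t0*P0*Q2*Q3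 + t0*t0*P0*Q1*Q2 + t0*t0*P0*Q0*Q3 + t0*t0*P0*P2 + t0*t0*P0*P2*Q3 + t0*t0*P0*P2*Q1 + t0*t0*P0*P0 + t0*t0*P0*P0*Q3 + t0*t0*P0*P0*Q1)*((1 + P3)*(P1*P2 + Q2 + P1) + P1*(P2*P3 + Q3 + P2)) + (t0 + t0*Q3 + t0*Q1 + t0*P1 + t0*t0*Q3 + t0*t0*Q3*Q3 + t0*t0*Q1 + t0*t0*Q1*Q3 + t0*t0*Q0 + t0*t0*Q0*Q3 + t0*t0*Q0*Q1 + t0*t0*Q0*Q1*Q3 + t0*t0*P3*Q3 + t0*t0*P3*Q1 + t0*t0*P3*Q0 + t0*t0*P3*Q0*Q1 + t0*t0*P0 + t0*t0*P0*Q3*Q3 + t0*t0*P0*Q1 + t0*t0*P0*Q1*Q3 + t0*t0*P0*P3 + t0*t0*P0*P3*Q3 + t0*t0*P0*P3*Q1)*((1 + P0)*(P2*P3 + Q3 + P2) + P2*(P3*P0 + Q0 + P3)) + (t0 + t0*Q3 + t0*Q1 + t0*Q0 + t0*P2 + t0*t0*Q3*Q3 + t0*t0*Q2*Q3 + t0*t0*Q1*Q3 + t0*t0*Q1*Q2 + t0*t0*Q0*Q3 + t0*t0*Q0*Q2 + t0*t0*Q0*Q1 + t0*t0*Q0*Q1*Q2 + t0*t0*P0*Q3 + t0*t0*P0*Q3*Q3 + t0*t0*P0*Q2 + t0*t0*P0*Q2*Q3 + t0*t0*P0*Q1 + t0*t0*P0*Q1*Q3 + t0*t0*P0*Q1*Q2)*((1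 + P1)*(P3*P0 + Q0 + P3) + P3*(P0*P1 + Q1 + P0)) + (t0 + t0*Q3 + t0*P3 + t0*P0 + t0*t0*Q3 + t0*t0*Q3*Q3 + t0*t0*Q1 + t0*t0*Q1*Q3 + t0*t0*Q0 + t0*t0*Q0*Q3 + t0*t0*P3*Q3 + t0*t0*P3*Q1 + t0*t0*P3*Q0 + t0*t0*P3*Q0*Q1 + t0*t0*P0 + t0*t0*P0*Q3*Q3 + t0*t0*P0*Q1*Q3 + t0*t0*P0*Q0 + t0*t0*P0*Q0*Q3 + t0*t0*P0*P3 + t0*t0*P0*P3*Q3 + t0*t0*P0*P3*Q1 + t0*t0*P0*P0)*(1 + (1 + P2)*((1 + Q1 + P1 + Q0) + P1*Q0) + (P1*P2 + Q2 + P1)*Q0) + (t0*Q2 + t0*Q1 + t0*Q0 + t0*P1 + t0*P0 + t0*t0*Q2*Q3 + t0*t0*Q1*Q2 + t0*t0*Q0*Q2 + t0*t0*Q0*Q1 + t0*t0*Q0*Q1*Q3 + t0*t0*Q0*Q1*Q2 + t0*t0*P0*Q2 + t0*t0*P0*Q2*Q3 + t0*t0*P0*Q1 + t0*t0*P0*Q1*Q2 + t0*t0*P0*Q0 + t0*t0*P0*Q0*Q3 + t0*t0*P0*P0)*(1 + (1 + P3)*((1 + Q2 + P2 + Q1) + P2*Q1) + (P2*P3 + Q3 + P2)*Q1) + (t0 + t0*Q1 + t0*P1 + t0*t0*Q3*Q3 + t0*t0*Q1*Q3 + t0*t0*Q0*Q3 + t0*t0*Q0*Q1 + t0*t0*P0*Q3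 + t0*t0*P0*Q3*Q3 + t0*t0*P0*Q1 + t0*t0*P0*Q1*Q3)*(1 + (1 + P0)*((1 + Q3 + P3 + Q2) + P3*Q2) + (P3*P0 + Q0 + P3)*Q2) + (t0*Q2 + t0*Q1 + t0*Q0 + t0*P3 + t0*t0*Q3 + t0*t0*Q2*Q3 + t0*t0*Q1 + t0*t0*Q1*Q2 + t0*t0*Q0 + t0*t0*Q0*Q2 + t0*t0*Q0*Q1*Q3 + t0*t0*Q0*Q1*Q2 + t0*t0*P3*Q3 + t0*t0*P3*Q1 + t0*t0*P3*Q0 + t0*t0*P3*Q0*Q1 + t0*t0*P0 + t0*t0*P0*Q3 + t0*t0*P0*Q2 + t0*t0*P0*Q2*Q3 + t0*t0*P0*Q1*Q2 + t0*t0*P0*P3 + t0*t0*P0*P3*Q3 + t0*t0*P0*P3*Q1)*(1 + (1 + P1)*((1 + Q0 + P0 + Q3) + P0*Q3) + (P0*P1 + Q1 + P0)*Q3) + (Q1 + Q0 + t0*Q3*Q3 + t0*Q2*Q3 + t0*Q1*Q3 + t0*Q1*Q2 + t0*Q0*Q3 + t0*Q0*Q2*Q3 + t0*Q0*Q1 + t0*Q0*Q1*Q2 + t0*P0*Q3 + t0*P0*Q3*Q3 + t0*P0*Q2*Q3 + t0*P0*Q1 + t0*P0*Q1*Q3 + t0*P0*Q1*Q2)*(t0*(P0*P1 + Q1 + P0) + 1) + (1 + 1)*(-(2%:R*t0) + -(2%:R*t0*Q3) + -t0*Q3*Q3 + -(3%:R*t0*Q2) + -t0*Q2*Q3 + -t0*Q2*Q2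 + -(4%:R*t0*Q1) + -(3%:R*t0*Q1*Q3) + -(2%:R*t0*Q1*Q2) + -t0*Q1*Q2*Q3 + -t0*Q1*Q1 + -t0*Q1*Q1*Q3 + -(3%:R*t0*Q0) + -(2%:R*t0*Q0*Q3) + -(2%:R*t0*Q0*Q2) + -t0*Q0*Q2*Q3 + -(3%:R*t0*Q0*Q1) + -t0*Q0*Q1*Q3 + -t0*Q0*Q1*Q2 + -t0*Q0*Q0 + -(3%:R*t0*P3) + -t0*P3*Q3 + -(2%:R*t0*P3*Q2) + -t0*P3*Q2*Q2 + -(3%:R*t0*P3*Q1) + -t0*P3*Q1*Q3 + -(2%:R*t0*P3*Q1*Q2) + -t0*P3*Q1*Q1 + -(2%:R*t0*P3*Q0) + -t0*P3*Q0*Q2 + -t0*P3*Q0*Q1 + -t0*P2 + -t0*P2*Q3 + -t0*P2*Q2 + -(2%:R*t0*P2*Q1) + -t0*P2*Q1*Q3 + -t0*P2*Q1*Q2 + -t0*P2*Q1*Q1 + -(2%:R*t0*P2*Q0) + -t0*P2*Q0*Q3 + -(2%:R*t0*P2*Q0*Q1) + -(2%:R*t0*P2*P3) + -t0*P2*P3*Q3 + -t0*P2*P3*Q2 + -(3%:R*t0*P2*P3*Q1) + -t0*P2*P3*Q1*Q2 + -t0*P2*P3*Q1*Q1 + -t0*P2*P3*Q0 + -t0*P2*P3*Q0*Q1 + -(3%:R*t0*P1) + -(2%:R*t0*P1*Q3) + -(2%:R*t0*P1*Q2) + -t0*P1*Q2*Q3 + -t0*P1*Q1 + -t0*P1*Q1*Q3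 + -(2%:R*t0*P1*Q0) + -(2%:R*t0*P1*Q0*Q3) + -t0*P1*Q0*Q2 + -t0*P1*Q0*Q1 + -t0*P1*Q0*Q0 + -(3%:R*t0*P1*P3) + -t0*P1*P3*Q3 + -(2%:R*t0*P1*P3*Q2) + -t0*P1*P3*Q1 + -(2%:R*t0*P1*P3*Q0) + -(3%:R*t0*P1*P2) + -t0*P1*P2*Q3 + -t0*P1*P2*Q2 + -t0*P1*P2*Q1 + -(2%:R*t0*P1*P2*Q0) + -t0*P1*P2*Q0*Q3 + -(4%:R*t0*P1*P2*P3) + -t0*P1*P2*P3*Q2 + -t0*P1*P2*P3*Q1 + -t0*P1*P2*P3*Q0 + -t0*P1*P2*P2 + -t0*P1*P2*P2*P3 + -(3%:R*t0*P0) + -(2%:R*t0*P0*Q3) + -t0*P0*Q3*Q3 + -(2%:R*t0*P0*Q2) + -(2%:R*t0*P0*Q2*Q3) + -(3%:R*t0*P0*Q1) + -(3%:R*t0*P0*Q1*Q3) + -t0*P0*Q1*Q2 + -(2%:R*t0*P0*Q0) + -t0*P0*Q0*Q3 + -t0*P0*Q0*Q2 + -(3%:R*t0*P0*P3) + -(2%:R*t0*P0*P3*Q3) + -(2%:R*t0*P0*P3*Q2) + -(2%:R*t0*P0*P3*Q1) + -t0*P0*P3*Q1*Q2 + -t0*P0*P3*Q0 + -(2%:R*t0*P0*P2) + -t0*P0*P2*Q3 + -(2%:R*t0*P0*P2*Q1) + -t0*P0*P2*Q0 + -(3%:R*t0*P0*P2*P3) + -t0*P0*P2*P3*Q3 +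 -(2%:R*t0*P0*P2*P3*Q1) + -(2%:R*t0*P0*P1) + -(2%:R*t0*P0*P1*Q3) + -t0*P0*P1*Q2 + -t0*P0*P1*Q2*Q3 + -t0*P0*P1*Q1 + -t0*P0*P1*Q1*Q3 + -(3%:R*t0*P0*P1*Q0) + -t0*P0*P1*Q0*Q3 + -(3%:R*t0*P0*P1*P3) + -(2%:R*t0*P0*P1*P3*Q3) + -t0*P0*P1*P3*Q2 + -t0*P0*P1*P3*Q1 + -t0*P0*P1*P3*Q0 + -(2%:R*t0*P0*P1*P2) + -t0*P0*P1*P2*Q3 + -(2%:R*t0*P0*P1*P2*Q0) + -(3%:R*t0*P0*P1*P2*P3) + -(2%:R*t0*t0*Q3) + -(3%:R*t0*t0*Q3*Q3) + -t0*t0*Q3*Q3*Q3 + -(2%:R*t0*t0*Q2*Q3) + -t0*t0*Q2*Q3*Q3 + -t0*t0*Q2*Q2*Q3 + -(2%:R*t0*t0*Q1) + -(4%:R*t0*t0*Q1*Q3) + -(3%:R*t0*t0*Q1*Q3*Q3) + -(2%:R*t0*t0*Q1*Q2) + -(2%:R*t0*t0*Q1*Q2*Q3) + -t0*t0*Q1*Q2*Q3*Q3 + -t0*t0*Q1*Q2*Q2 + -t0*t0*Q1*Q1 + -(2%:R*t0*t0*Q1*Q1*Q3) + -t0*t0*Q1*Q1*Q2 + -t0*t0*Q1*Q1*Q2*Q3 + -(2%:R*t0*t0*Q0) + -(4%:R*t0*t0*Q0*Q3) + -(2%:R*t0*t0*Q0*Q3*Q3) + -(2%:R*t0*t0*Q0*Q2)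 + -(3%:R*t0*t0*Q0*Q2*Q3) + -t0*t0*Q0*Q2*Q3*Q3 + -t0*t0*Q0*Q2*Q2 + -(4%:R*t0*t0*Q0*Q1) + -(6%:R*t0*t0*Q0*Q1*Q3) + -t0*t0*Q0*Q1*Q3*Q3 + -(5%:R*t0*t0*Q0*Q1*Q2) + -(4%:R*t0*t0*Q0*Q1*Q2*Q3) + -t0*t0*Q0*Q1*Q2*Q2 + -t0*t0*Q0*Q1*Q1 + -t0*t0*Q0*Q1*Q1*Q3 + -t0*t0*Q0*Q1*Q1*Q3*Q3 + -t0*t0*Q0*Q1*Q1*Q2 + -t0*t0*Q0*Q1*Q1*Q2*Q3 + -t0*t0*Q0*Q0 + -t0*t0*Q0*Q0*Q3 + -(2%:R*t0*t0*Q0*Q0*Q2) + -t0*t0*Q0*Q0*Q2*Q3 + -t0*t0*Q0*Q0*Q1 + -t0*t0*Q0*Q0*Q1*Q3 + -(2%:R*t0*t0*Q0*Q0*Q1*Q2) + -(2%:R*t0*t0*P3*Q3) + -(2%:R*t0*t0*P3*Q3*Q3) + -t0*t0*P3*Q2*Q3 + -t0*t0*P3*Q2*Q3*Q3 + -t0*t0*P3*Q2*Q2*Q3 + -(2%:R*t0*t0*P3*Q1) + -(3%:R*t0*t0*P3*Q1*Q3) + -t0*t0*P3*Q1*Q3*Q3 + -t0*t0*P3*Q1*Q2 + -(2%:R*t0*t0*P3*Q1*Q2*Q3) + -t0*t0*P3*Q1*Q2*Q2 + -t0*t0*P3*Q1*Q1 + -t0*t0*P3*Q1*Q1*Q3 +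 -t0*t0*P3*Q1*Q1*Q2 + -(2%:R*t0*t0*P3*Q0) + -(3%:R*t0*t0*P3*Q0*Q3) + -t0*t0*P3*Q0*Q2 + -(2%:R*t0*t0*P3*Q0*Q2*Q3) + -t0*t0*P3*Q0*Q2*Q2 + -(5%:R*t0*t0*P3*Q0*Q1) + -(3%:R*t0*t0*P3*Q0*Q1*Q3) + -(4%:R*t0*t0*P3*Q0*Q1*Q2) + -t0*t0*P3*Q0*Q1*Q2*Q3 + -t0*t0*P3*Q0*Q1*Q2*Q2 + -(2%:R*t0*t0*P3*Q0*Q1*Q1) + -t0*t0*P3*Q0*Q1*Q1*Q3 + -t0*t0*P3*Q0*Q1*Q1*Q2 + -t0*t0*P3*Q0*Q0 + -t0*t0*P3*Q0*Q0*Q2 + -t0*t0*P3*Q0*Q0*Q1 + -t0*t0*P3*Q0*Q0*Q1*Q2 + -t0*t0*P2*Q3 + -t0*t0*P2*Q3*Q3 + -t0*t0*P2*Q2*Q3 + -t0*t0*P2*Q1 + -(2%:R*t0*t0*P2*Q1*Q3) + -t0*t0*P2*Q1*Q3*Q3 + -t0*t0*P2*Q1*Q2 + -t0*t0*P2*Q1*Q2*Q3 + -t0*t0*P2*Q1*Q1 + -t0*t0*P2*Q1*Q1*Q3 + -t0*t0*P2*Q1*Q1*Q2 + -t0*t0*P2*Q0 + -(2%:R*t0*t0*P2*Q0*Q3) + -t0*t0*P2*Q0*Q3*Q3 + -t0*t0*P2*Q0*Q2 + -(3%:R*t0*t0*P2*Q0*Q1) + -(3%:R*t0*t0*P2*Q0*Q1*Q3)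 + -(2%:R*t0*t0*P2*Q0*Q1*Q2) + -t0*t0*P2*Q0*Q1*Q1 + -t0*t0*P2*Q0*Q1*Q1*Q3 + -t0*t0*P2*Q0*Q1*Q1*Q2 + -t0*t0*P2*Q0*Q0 + -t0*t0*P2*Q0*Q0*Q3 + -t0*t0*P2*Q0*Q0*Q1 + -t0*t0*P2*Q0*Q0*Q1*Q3 + -(2%:R*t0*t0*P2*P3*Q3) + -t0*t0*P2*P3*Q3*Q3 + -t0*t0*P2*P3*Q2*Q3 + -(2%:R*t0*t0*P2*P3*Q1) + -(2%:R*t0*t0*P2*P3*Q1*Q3) + -t0*t0*P2*P3*Q1*Q2 + -t0*t0*P2*P3*Q1*Q2*Q3 + -t0*t0*P2*P3*Q1*Q1 + -t0*t0*P2*P3*Q1*Q1*Q2 + -(2%:R*t0*t0*P2*P3*Q0) + -(2%:R*t0*t0*P2*P3*Q0*Q3) + -t0*t0*P2*P3*Q0*Q2 + -(4%:R*t0*t0*P2*P3*Q0*Q1) + -(2%:R*t0*t0*P2*P3*Q0*Q1*Q3) + -(2%:R*t0*t0*P2*P3*Q0*Q1*Q2) + -(2%:R*t0*t0*P2*P3*Q0*Q1*Q1) + -t0*t0*P2*P3*Q0*Q1*Q1*Q3 + -t0*t0*P2*P3*Q0*Q1*Q1*Q2 + -t0*t0*P2*P3*Q0*Q0 + -t0*t0*P2*P3*Q0*Q0*Q1 + -t0*t0*P2*P3*P3*Q3 + -t0*t0*P2*P3*P3*Q1 + -t0*t0*P2*P3*P3*Q0 + -t0*t0*P2*P3*P3*Q0*Q1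 + -t0*t0*P1*Q3 + -t0*t0*P1*Q3*Q3 + -t0*t0*P1*Q2*Q3 + -t0*t0*P1*Q2*Q3*Q3 + -t0*t0*P1*Q1 + -t0*t0*P1*Q1*Q3 + -t0*t0*P1*Q1*Q2 + -t0*t0*P1*Q1*Q2*Q3 + -t0*t0*P1*Q0 + -(3%:R*t0*t0*P1*Q0*Q3) + -(2%:R*t0*t0*P1*Q0*Q3*Q3) + -t0*t0*P1*Q0*Q2 + -(2%:R*t0*t0*P1*Q0*Q2*Q3) + -(2%:R*t0*t0*P1*Q0*Q1) + -(3%:R*t0*t0*P1*Q0*Q1*Q3) + -t0*t0*P1*Q0*Q1*Q3*Q3 + -(2%:R*t0*t0*P1*Q0*Q1*Q2) + -t0*t0*P1*Q0*Q1*Q2*Q3 + -(2%:R*t0*t0*P1*Q0*Q0) + -(2%:R*t0*t0*P1*Q0*Q0*Q3) + -t0*t0*P1*Q0*Q0*Q2 + -t0*t0*P1*Q0*Q0*Q1 + -t0*t0*P1*Q0*Q0*Q1*Q3 + -t0*t0*P1*Q0*Q0*Q1*Q2 + -t0*t0*P1*P3*Q3 + -t0*t0*P1*P3*Q3*Q3 + -t0*t0*P1*P3*Q2*Q3 + -t0*t0*P1*P3*Q1 + -t0*t0*P1*P3*Q1*Q3 + -t0*t0*P1*P3*Q1*Q2 + -t0*t0*P1*P3*Q0 + -(3%:R*t0*t0*P1*P3*Q0*Q3) + -t0*t0*P1*P3*Q0*Q2 + -(3%:R*t0*t0*P1*P3*Q0*Q1) + -t0*t0*P1*P3*Q0*Q1*Q3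 + -t0*t0*P1*P3*Q0*Q1*Q2 + -(2%:R*t0*t0*P1*P3*Q0*Q0) + -(2%:R*t0*t0*P1*P3*Q0*Q0*Q1) + -t0*t0*P1*P2*Q3 + -t0*t0*P1*P2*Q3*Q3 + -t0*t0*P1*P2*Q2*Q3 + -t0*t0*P1*P2*Q1 + -t0*t0*P1*P2*Q1*Q3 + -t0*t0*P1*P2*Q1*Q2 + -t0*t0*P1*P2*Q0 + -(3%:R*t0*t0*P1*P2*Q0*Q3) + -t0*t0*P1*P2*Q0*Q3*Q3 + -t0*t0*P1*P2*Q0*Q2 + -(2%:R*t0*t0*P1*P2*Q0*Q1) + -(3%:R*t0*t0*P1*P2*Q0*Q1*Q3) + -t0*t0*P1*P2*Q0*Q1*Q2 + -(2%:R*t0*t0*P1*P2*Q0*Q0) + -t0*t0*P1*P2*Q0*Q0*Q3 + -t0*t0*P1*P2*Q0*Q0*Q1 + -t0*t0*P1*P2*P3*Q3 + -t0*t0*P1*P2*P3*Q2*Q3 + -t0*t0*P1*P2*P3*Q1 + -t0*t0*P1*P2*P3*Q1*Q2 + -t0*t0*P1*P2*P3*Q0 + -(2%:R*t0*t0*P1*P2*P3*Q0*Q3) + -t0*t0*P1*P2*P3*Q0*Q2 + -(2%:R*t0*t0*P1*P2*P3*Q0*Q1) + -t0*t0*P1*P2*P3*Q0*Q1*Q3 + -t0*t0*P1*P2*P3*Q0*Q1*Q2 + -(2%:R*t0*t0*P1*P2*P3*Q0*Q0) + -(2%:R*t0*t0*P1*P2*P3*Q0*Q0*Q1) + -t0*t0*P1*P2*P2*Q3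 + -t0*t0*P1*P2*P2*Q1 + -t0*t0*P1*P2*P2*Q0 + -t0*t0*P1*P2*P2*Q0*Q1 + -t0*t0*P1*P2*P2*P3*Q3 + -t0*t0*P1*P2*P2*P3*Q1 + -t0*t0*P1*P2*P2*P3*Q0 + -t0*t0*P1*P2*P2*P3*Q0*Q1 + -(2%:R*t0*t0*P0) + -(4%:R*t0*t0*P0*Q3) + -(6%:R*t0*t0*P0*Q3*Q3) + -(2%:R*t0*t0*P0*Q3*Q3*Q3) + -(2%:R*t0*t0*P0*Q2) + -(5%:R*t0*t0*P0*Q2*Q3) + -(3%:R*t0*t0*P0*Q2*Q3*Q3) + -t0*t0*P0*Q2*Q2 + -t0*t0*P0*Q2*Q2*Q3 + -(4%:R*t0*t0*P0*Q1) + -(7%:R*t0*t0*P0*Q1*Q3) + -(4%:R*t0*t0*P0*Q1*Q3*Q3) + -(5%:R*t0*t0*P0*Q1*Q2) + -(5%:R*t0*t0*P0*Q1*Q2*Q3) + -t0*t0*P0*Q1*Q2*Q3*Q3 + -t0*t0*P0*Q1*Q2*Q2 + -t0*t0*P0*Q1*Q1 + -(2%:R*t0*t0*P0*Q1*Q1*Q3) + -t0*t0*P0*Q1*Q1*Q2 + -t0*t0*P0*Q1*Q1*Q2*Q3 + -(4%:R*t0*t0*P0*Q0) + -(6%:R*t0*t0*P0*Q0*Q3) + -(2%:R*t0*t0*P0*Q0*Q3*Q3) + -(3%:R*t0*t0*P0*Q0*Q2) + -(5%:R*t0*t0*P0*Q0*Q2*Q3) + -t0*t0*P0*Q0*Q2*Q3*Q3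 + -(3%:R*t0*t0*P0*Q0*Q1) + -(4%:R*t0*t0*P0*Q0*Q1*Q3) + -(2%:R*t0*t0*P0*Q0*Q1*Q3*Q3) + -(3%:R*t0*t0*P0*Q0*Q1*Q2) + -(2%:R*t0*t0*P0*Q0*Q1*Q2*Q3) + -t0*t0*P0*Q0*Q0 + -t0*t0*P0*Q0*Q0*Q3 + -t0*t0*P0*Q0*Q0*Q2 + -t0*t0*P0*Q0*Q0*Q2*Q3 + -(2%:R*t0*t0*P0*P3) + -(5%:R*t0*t0*P0*P3*Q3) + -(5%:R*t0*t0*P0*P3*Q3*Q3) + -t0*t0*P0*P3*Q2 + -(4%:R*t0*t0*P0*P3*Q2*Q3) + -(2%:R*t0*t0*P0*P3*Q2*Q3*Q3) + -t0*t0*P0*P3*Q2*Q2 + -t0*t0*P0*P3*Q2*Q2*Q3 + -(5%:R*t0*t0*P0*P3*Q1) + -(7%:R*t0*t0*P0*P3*Q1*Q3) + -t0*t0*P0*P3*Q1*Q3*Q3 + -(5%:R*t0*t0*P0*P3*Q1*Q2) + -(3%:R*t0*t0*P0*P3*Q1*Q2*Q3) + -t0*t0*P0*P3*Q1*Q2*Q2 + -(2%:R*t0*t0*P0*P3*Q1*Q1) + -t0*t0*P0*P3*Q1*Q1*Q3 + -t0*t0*P0*P3*Q1*Q1*Q2 + -(2%:R*t0*t0*P0*P3*Q0) + -(5%:R*t0*t0*P0*P3*Q0*Q3) + -(2%:R*t0*t0*P0*P3*Q0*Q2) + -(3%:R*t0*t0*P0*P3*Q0*Q2*Q3) + -(4%:R*t0*t0*P0*P3*Q0*Q1)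 + -(2%:R*t0*t0*P0*P3*Q0*Q1*Q3) + -(3%:R*t0*t0*P0*P3*Q0*Q1*Q2) + -t0*t0*P0*P2 + -t0*t0*P0*P2*Q3 + -(2%:R*t0*t0*P0*P2*Q3*Q3) + -t0*t0*P0*P2*Q2 + -t0*t0*P0*P2*Q2*Q3 + -(3%:R*t0*t0*P0*P2*Q1) + -(2%:R*t0*t0*P0*P2*Q1*Q3) + -t0*t0*P0*P2*Q1*Q3*Q3 + -(2%:R*t0*t0*P0*P2*Q1*Q2) + -t0*t0*P0*P2*Q1*Q2*Q3 + -t0*t0*P0*P2*Q1*Q1 + -t0*t0*P0*P2*Q1*Q1*Q3 + -t0*t0*P0*P2*Q1*Q1*Q2 + -(3%:R*t0*t0*P0*P2*Q0) + -(2%:R*t0*t0*P0*P2*Q0*Q3) + -t0*t0*P0*P2*Q0*Q3*Q3 + -(3%:R*t0*t0*P0*P2*Q0*Q1) + -(3%:R*t0*t0*P0*P2*Q0*Q1*Q3) + -t0*t0*P0*P2*Q0*Q0 + -t0*t0*P0*P2*Q0*Q0*Q3 + -(2%:R*t0*t0*P0*P2*P3) + -(3%:R*t0*t0*P0*P2*P3*Q3) + -(2%:R*t0*t0*P0*P2*P3*Q3*Q3) + -t0*t0*P0*P2*P3*Q2 + -t0*t0*P0*P2*P3*Q2*Q3 + -(5%:R*t0*t0*P0*P2*P3*Q1) + -(3%:R*t0*t0*P0*P2*P3*Q1*Q3) + -(2%:R*t0*t0*P0*P2*P3*Q1*Q2) + -t0*t0*P0*P2*P3*Q1*Q2*Q3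 + -(2%:R*t0*t0*P0*P2*P3*Q1*Q1) + -t0*t0*P0*P2*P3*Q1*Q1*Q2 + -(3%:R*t0*t0*P0*P2*P3*Q0) + -(3%:R*t0*t0*P0*P2*P3*Q0*Q3) + -(4%:R*t0*t0*P0*P2*P3*Q0*Q1) + -(2%:R*t0*t0*P0*P2*P3*Q0*Q1*Q3) + -t0*t0*P0*P2*P3*P3 + -(2%:R*t0*t0*P0*P2*P3*P3*Q3) + -(2%:R*t0*t0*P0*P2*P3*P3*Q1) + -t0*t0*P0*P2*P3*P3*Q0 + -t0*t0*P0*P2*P3*P3*Q0*Q1 + -t0*t0*P0*P1 + -(3%:R*t0*t0*P0*P1*Q3) + -(4%:R*t0*t0*P0*P1*Q3*Q3) + -t0*t0*P0*P1*Q2 + -(3%:R*t0*t0*P0*P1*Q2*Q3) + -(2%:R*t0*t0*P0*P1*Q2*Q3*Q3) + -(2%:R*t0*t0*P0*P1*Q1) + -(3%:R*t0*t0*P0*P1*Q1*Q3) + -(2%:R*t0*t0*P0*P1*Q1*Q2) + -(2%:R*t0*t0*P0*P1*Q1*Q2*Q3) + -(4%:R*t0*t0*P0*P1*Q0) + -(5%:R*t0*t0*P0*P1*Q0*Q3) + -(2%:R*t0*t0*P0*P1*Q0*Q3*Q3) + -(2%:R*t0*t0*P0*P1*Q0*Q2) + -(3%:R*t0*t0*P0*P1*Q0*Q2*Q3) + -t0*t0*P0*P1*Q0*Q1 + -(2%:R*t0*t0*P0*P1*Q0*Q1*Q3) + -t0*t0*P0*P1*Q0*Q1*Q3*Q3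 + -(2%:R*t0*t0*P0*P1*Q0*Q1*Q2) + -t0*t0*P0*P1*Q0*Q1*Q2*Q3 + -(2%:R*t0*t0*P0*P1*Q0*Q0) + -(2%:R*t0*t0*P0*P1*Q0*Q0*Q3) + -t0*t0*P0*P1*P3 + -(4%:R*t0*t0*P0*P1*P3*Q3) + -(3%:R*t0*t0*P0*P1*P3*Q3*Q3) + -t0*t0*P0*P1*P3*Q2 + -(2%:R*t0*t0*P0*P1*P3*Q2*Q3) + -(3%:R*t0*t0*P0*P1*P3*Q1) + -(3%:R*t0*t0*P0*P1*P3*Q1*Q3) + -(2%:R*t0*t0*P0*P1*P3*Q1*Q2) + -(2%:R*t0*t0*P0*P1*P3*Q0) + -(5%:R*t0*t0*P0*P1*P3*Q0*Q3) + -t0*t0*P0*P1*P3*Q0*Q2 + -(4%:R*t0*t0*P0*P1*P3*Q0*Q1) + -t0*t0*P0*P1*P3*Q0*Q1*Q3 + -t0*t0*P0*P1*P3*Q0*Q1*Q2 + -t0*t0*P0*P1*P2 + -(3%:R*t0*t0*P0*P1*P2*Q3) + -(2%:R*t0*t0*P0*P1*P2*Q3*Q3) + -t0*t0*P0*P1*P2*Q2 + -t0*t0*P0*P1*P2*Q2*Q3 + -(2%:R*t0*t0*P0*P1*P2*Q1) + -(2%:R*t0*t0*P0*P1*P2*Q1*Q3) + -t0*t0*P0*P1*P2*Q1*Q2 + -(3%:R*t0*t0*P0*P1*P2*Q0) + -(3%:R*t0*t0*P0*P1*P2*Q0*Q3) + -t0*t0*P0*P1*P2*Q0*Q3*Q3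 + -t0*t0*P0*P1*P2*Q0*Q1*Q3 + -(2%:R*t0*t0*P0*P1*P2*Q0*Q0) + -(2%:R*t0*t0*P0*P1*P2*Q0*Q0*Q3) + -t0*t0*P0*P1*P2*P3 + -(3%:R*t0*t0*P0*P1*P2*P3*Q3) + -t0*t0*P0*P1*P2*P3*Q2 + -t0*t0*P0*P1*P2*P3*Q2*Q3 + -(2%:R*t0*t0*P0*P1*P2*P3*Q1) + -t0*t0*P0*P1*P2*P3*Q1*Q2 + -t0*t0*P0*P1*P2*P3*Q0 + -(3%:R*t0*t0*P0*P1*P2*P3*Q0*Q3) + -(2%:R*t0*t0*P0*P1*P2*P3*Q0*Q1) + -t0*t0*P0*P1*P2*P2 + -t0*t0*P0*P1*P2*P2*Q3 + -t0*t0*P0*P1*P2*P2*Q1 + -t0*t0*P0*P1*P2*P2*P3 + -t0*t0*P0*P1*P2*P2*P3*Q3 + -t0*t0*P0*P1*P2*P2*P3*Q1 + -t0*t0*P0*P1*P1*Q0 + -t0*t0*P0*P1*P1*Q0*Q3 + -t0*t0*P0*P1*P1*P2*Q0 + -t0*t0*P0*P1*P1*P2*Q0*Q3 + -(3%:R*t0*t0*P0*P0) + -(3%:R*t0*t0*P0*P0*Q3) + -(3%:R*t0*t0*P0*P0*Q3*Q3) + -t0*t0*P0*P0*Q3*Q3*Q3 + -(2%:R*t0*t0*P0*P0*Q2) + -(3%:R*t0*t0*P0*P0*Q2*Q3) + -(2%:R*t0*t0*P0*P0*Q2*Q3*Q3) + -(2%:R*t0*t0*P0*P0*Q1) + -(3%:R*t0*t0*P0*P0*Q1*Q3)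 + -t0*t0*P0*P0*Q1*Q3*Q3 + -(2%:R*t0*t0*P0*P0*Q1*Q2) + -(2%:R*t0*t0*P0*P0*Q1*Q2*Q3) + -t0*t0*P0*P0*Q0 + -t0*t0*P0*P0*Q0*Q2 + -t0*t0*P0*P0*P3 + -(4%:R*t0*t0*P0*P0*P3*Q3) + -(3%:R*t0*t0*P0*P0*P3*Q3*Q3) + -(2%:R*t0*t0*P0*P0*P3*Q2) + -(3%:R*t0*t0*P0*P0*P3*Q2*Q3) + -t0*t0*P0*P0*P3*Q2*Q3*Q3 + -(3%:R*t0*t0*P0*P0*P3*Q1) + -(3%:R*t0*t0*P0*P0*P3*Q1*Q3) + -(3%:R*t0*t0*P0*P0*P3*Q1*Q2) + -t0*t0*P0*P0*P3*Q1*Q2*Q3 + -(2%:R*t0*t0*P0*P0*P2) + -t0*t0*P0*P0*P2*Q3*Q3 + -(2%:R*t0*t0*P0*P0*P2*Q1) + -t0*t0*P0*P0*P2*Q1*Q3 + -t0*t0*P0*P0*P2*Q0 + -(2%:R*t0*t0*P0*P0*P2*P3) + -t0*t0*P0*P0*P2*P3*Q3 + -t0*t0*P0*P0*P2*P3*Q3*Q3 + -(3%:R*t0*t0*P0*P0*P2*P3*Q1) + -t0*t0*P0*P0*P2*P3*Q1*Q3 + -t0*t0*P0*P0*P2*P3*P3 + -t0*t0*P0*P0*P2*P3*P3*Q3 + -t0*t0*P0*P0*P2*P3*P3*Q1 + -(3%:R*t0*t0*P0*P0*P1) + -(3%:R*t0*t0*P0*P0*P1*Q3) + -(3%:R*t0*t0*P0*P0*P1*Q3*Q3)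 + -t0*t0*P0*P0*P1*Q2 + -(2%:R*t0*t0*P0*P0*P1*Q2*Q3) + -t0*t0*P0*P0*P1*Q2*Q3*Q3 + -t0*t0*P0*P0*P1*Q1 + -(2%:R*t0*t0*P0*P0*P1*Q1*Q3) + -t0*t0*P0*P0*P1*Q1*Q2 + -t0*t0*P0*P0*P1*Q1*Q2*Q3 + -(2%:R*t0*t0*P0*P0*P1*Q0) + -t0*t0*P0*P0*P1*P3 + -(4%:R*t0*t0*P0*P0*P1*P3*Q3) + -(2%:R*t0*t0*P0*P0*P1*P3*Q3*Q3) + -t0*t0*P0*P0*P1*P3*Q2 + -t0*t0*P0*P0*P1*P3*Q2*Q3 + -(3%:R*t0*t0*P0*P0*P1*P3*Q1) + -(2%:R*t0*t0*P0*P0*P1*P3*Q1*Q3) + -t0*t0*P0*P0*P1*P3*Q1*Q2 + -(3%:R*t0*t0*P0*P0*P1*P2) + -t0*t0*P0*P0*P1*P2*Q3 + -t0*t0*P0*P0*P1*P2*Q3*Q3 + -t0*t0*P0*P0*P1*P2*Q1 + -t0*t0*P0*P0*P1*P2*Q1*Q3 + -(2%:R*t0*t0*P0*P0*P1*P2*Q0) + -t0*t0*P0*P0*P1*P2*P3 + -(2%:R*t0*t0*P0*P0*P1*P2*P3*Q3) + -(2%:R*t0*t0*P0*P0*P1*P2*P3*Q1) + -t0*t0*P0*P0*P1*P1 + -t0*t0*P0*P0*P1*P1*P2) by ring.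
by rewrite E h0 h1 h2 h3 h4 h5 h6 h7 h8 two !(mulr0, mul0r, addr0).
Qed.

Lemma G2b0 (R : comRingType) (t0 P0 P1 P2 P3 Q0 Q1 Q2 Q3 : R) :
  1 + 1 = 0 :> R ->
  (1 + P2)*(P0*P1 + Q1 + P0) + P0*(P1*P2 + Q2 + P1) = 0 ->
  (1 + P3)*(P1*P2 + Q2 + P1) + P1*(P2*P3 + Q3 + P2) = 0 ->
  (1 + P0)*(P2*P3 + Q3 + P2) + P2*(P3*P0 + Q0 + P3) = 0 ->
  (1 + P1)*(P3*P0 + Q0 + P3) + P3*(P0*P1 + Q1 + P0) = 0 ->
  1 + (1 + P2)*((1 + Q1 + P1 + Q0) + P1*Q0) + (P1*P2 + Q2 + P1)*Q0 = 0 ->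
  1 + (1 + P3)*((1 + Q2 + P2 + Q1) + P2*Q1) + (P2*P3 + Q3 + P2)*Q1 = 0 ->
  1 + (1 + P0)*((1 + Q3 + P3 + Q2) + P3*Q2) + (P3*P0 + Q0 + P3)*Q2 = 0 ->
  1 + (1 + P1)*((1 + Q0 + P0 + Q3) + P0*Q3) + (P0*P1 + Q1 + P0)*Q3 = 0 ->
  t0*(P0*P1 + Q1 + P0) + 1 = 0 ->
  Q1 + Q0 = 0 ->
  Q2 + Q1 = 0 ->
  Q3 + Q2 = 0 ->
  Q0*Q0 + Q0 + 1 = 0.
Proof.
move=> two h0 h1 h2 h3 h4 h5 h6 h7 h8 h9 h10 h11.
have E : Q0*Q0 + Q0 + 1 = (t0*Q3 + t0*P3*P3*Q3 + t0*P2 + t0*P2*P3*P3)*((1 + P2)*(P0*P1 + Q1 + P0) + P0*(P1*P2 + Q2 + P1)) + (Q3 + P3 + t0 + t0*P3*P3 + t0*P2 + t0*P2*Q3 + t0*P2*P3*Q3 + t0*P2*P3*P3)*((1 + P3)*(P1*P2 + Q2 + P1) + P1*(P2*P3 + Q3 + P2)) + (t0 + t0*Q3 + t0*P3*P3 + t0*P3*P3*Q3 + t0*P2 + t0*P2*P3*P3)*((1 + P0)*(P2*P3 + Q3 + P2) + P2*(P3*P0 + Q0 + P3)) + (1 + Q3 + P3 + t0 + t0*P3*P3 + t0*P2*Q3 + t0*P2*P3 + t0*P2*P3*Q3 + t0*P2*P3*P3)*((1 + P1)*(P3*P0 + Q0 + P3) + P3*(P0*P1 + Q1 + P0)) + (0)*(1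 + (1 + P2)*((1 + Q1 + P1 + Q0) + P1*Q0) + (P1*P2 + Q2 + P1)*Q0) + (1 + t0 + t0*Q2 + t0*Q1 + t0*P3*Q2 + t0*P3*Q1 + t0*P3*P3 + t0*P2 + t0*P2*P3)*(1 + (1 + P3)*((1 + Q2 + P2 + Q1) + P2*Q1) + (P2*P3 + Q3 + P2)*Q1) + (0)*(1 + (1 + P0)*((1 + Q3 + P3 + Q2) + P3*Q2) + (P3*P0 + Q0 + P3)*Q2) + (t0 + t0*P3*P3 + t0*P2 + t0*P2*P3)*(1 + (1 + P1)*((1 + Q0 + P0 + Q3) + P0*Q3) + (P0*P1 + Q1 + P0)*Q3) + (1 + P3*P3 + P2 + P2*P3)*(t0*(P0*P1 + Q1 + P0) + 1) + (Q3 + Q1 + Q0 + P3 + P1 + P1*Q3 + P1*P3 + t0*P2*P3*Q3 + t0*P2*P3*P3*Q3 + t0*P2*P2 + t0*P2*P2*P3*P3 + t0*P1*P2 + t0*P1*P2*Q3 + t0*P1*P2*P3*Q3 + t0*P1*P2*P3*P3)*(Q1 + Q0) + (1 + Q2 + Q1 + P3 + P3*Q3 + P3*P3 + P1 + P1*Q3 + P1*P3 + t0*Q3 + t0*Q2 + t0*Q1 + t0*Q1*Q3 + t0*P3 + t0*P3*Q1*Q3 + t0*P3*P3 + t0*P3*P3*Q3 + t0*P3*P3*Q2 + t0*P3*P3*Q1 + t0*P2*Q3 + t0*P2*P3 + t0*P2*P3*P3*Q3 + t0*P2*P3*P3*P3 + t0*P1*P2 + t0*P1*P2*Q3 + t0*P1*P2*P3*Q3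 + t0*P1*P2*P3*P3)*(Q2 + Q1) + (Q2 + P3 + P1 + P1*Q3 + P1*P3 + t0*Q3 + t0*P3*P3*Q3 + t0*P2 + t0*P2*P3*P3 + t0*P1*P2 + t0*P1*P2*Q3 + t0*P1*P2*P3*Q3 + t0*P1*P2*P3*P3 + t0*P0*Q3 + t0*P0*P3*P3*Q3 + t0*P0*P2 + t0*P0*P2*P3*P3)*(Q3 + Q2) + (1 + 1)*(-1 + -Q2 + -Q2*Q3 + -Q2*Q2 + -Q1 + -Q1*Q3 + -Q1*Q2 + -Q1*Q1 + -Q0*Q3 + -Q0*Q1 + -P3 + -P3*Q3 + -(2%:R*P3*Q2) + -P3*Q2*Q3 + -(2%:R*P3*Q1) + -P3*Q1*Q3 + -P3*Q0 + -P3*P3 + -P3*P3*Q2 + -P3*P3*Q1 + -P2 + -P2*Q1 + -P2*P3 + -P2*P3*Q1 + -P1*Q3 + -P1*Q3*Q3 + -P1*Q2 + -P1*Q2*Q3 + -P1*Q1 + -P1*Q1*Q3 + -P1*Q0 + -P1*Q0*Q3 + -P1*P3 + -(2%:R*P1*P3*Q3) + -P1*P3*Q2 + -P1*P3*Q1 + -P1*P3*Q0 + -P1*P3*P3 + -P1*P2*Q3 + -P1*P2*P3 + -P1*P2*P3*Q3 + -P1*P2*P3*P3 + -P0*P3 + -P0*P3*Q3 + -P0*P3*P3 + -P0*P1*P3 + -P0*P1*P3*Q3 + -P0*P1*P3*P3 + -(2%:R*t0) + -t0*Q3 + -t0*Q3*Q3 + -(2%:R*t0*Q2) + -t0*Q2*Q3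 + -t0*Q2*Q2 + -(2%:R*t0*Q1) + -(2%:R*t0*Q1*Q3) + -(2%:R*t0*Q1*Q2) + -t0*Q1*Q2*Q3 + -t0*Q1*Q1 + -t0*Q1*Q1*Q3 + -t0*Q0 + -t0*P3 + -(3%:R*t0*P3*Q2) + -t0*P3*Q2*Q2 + -(3%:R*t0*P3*Q1) + -(2%:R*t0*P3*Q1*Q2) + -t0*P3*Q1*Q2*Q3 + -t0*P3*Q1*Q1 + -t0*P3*Q1*Q1*Q3 + -(2%:R*t0*P3*P3) + -t0*P3*P3*Q3 + -t0*P3*P3*Q3*Q3 + -(2%:R*t0*P3*P3*Q2) + -t0*P3*P3*Q2*Q3 + -t0*P3*P3*Q2*Q2 + -(2%:R*t0*P3*P3*Q1) + -(2%:R*t0*P3*P3*Q1*Q3) + -(2%:R*t0*P3*P3*Q1*Q2) + -t0*P3*P3*Q1*Q1 + -t0*P3*P3*Q0 + -t0*P3*P3*P3 + -t0*P3*P3*P3*Q2 + -t0*P3*P3*P3*Q1 + -(3%:R*t0*P2) + -(2%:R*t0*P2*Q3) + -(2%:R*t0*P2*Q2) + -t0*P2*Q2*Q3 + -(3%:R*t0*P2*Q1) + -(2%:R*t0*P2*Q1*Q3) + -t0*P2*Q1*Q2 + -t0*P2*Q1*Q1 + -t0*P2*Q0 + -t0*P2*Q0*Q3 + -(4%:R*t0*P2*P3) + -(2%:R*t0*P2*P3*Q3) + -(3%:R*t0*P2*P3*Q2) + -t0*P2*P3*Q2*Q3 + -(4%:R*t0*P2*P3*Q1) + -(2%:R*t0*P2*P3*Q1*Q3)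 + -(2%:R*t0*P2*P3*Q1*Q2) + -(2%:R*t0*P2*P3*Q1*Q1) + -t0*P2*P3*Q0 + -t0*P2*P3*Q0*Q3 + -(2%:R*t0*P2*P3*P3) + -(2%:R*t0*P2*P3*P3*Q3) + -(2%:R*t0*P2*P3*P3*Q2) + -t0*P2*P3*P3*Q2*Q3 + -(3%:R*t0*P2*P3*P3*Q1) + -(2%:R*t0*P2*P3*P3*Q1*Q3) + -t0*P2*P3*P3*Q1*Q2 + -t0*P2*P3*P3*Q1*Q1 + -t0*P2*P3*P3*Q0 + -t0*P2*P3*P3*Q0*Q3 + -(2%:R*t0*P2*P3*P3*P3) + -t0*P2*P3*P3*P3*Q3 + -t0*P2*P3*P3*P3*Q2 + -(2%:R*t0*P2*P3*P3*P3*Q1) + -t0*P2*P2 + -(2%:R*t0*P2*P2*Q1) + -t0*P2*P2*Q0 + -(2%:R*t0*P2*P2*P3) + -(2%:R*t0*P2*P2*P3*Q1) + -t0*P2*P2*P3*P3 + -(2%:R*t0*P2*P2*P3*P3*Q1) + -t0*P2*P2*P3*P3*Q0 + -t0*P2*P2*P3*P3*P3 + -t0*P1 + -t0*P1*Q3 + -t0*P1*Q0 + -t0*P1*P3 + -t0*P1*P3*P3 + -t0*P1*P3*P3*Q3 + -t0*P1*P3*P3*Q0 + -t0*P1*P3*P3*P3 + -(2%:R*t0*P1*P2) + -(2%:R*t0*P1*P2*Q3) + -t0*P1*P2*Q3*Q3 + -t0*P1*P2*Q2 + -t0*P1*P2*Q2*Q3 + -t0*P1*P2*Q1 + -t0*P1*P2*Q1*Q3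 + -t0*P1*P2*Q0 + -t0*P1*P2*Q0*Q3 + -(2%:R*t0*P1*P2*P3) + -(2%:R*t0*P1*P2*P3*Q3) + -t0*P1*P2*P3*Q3*Q3 + -t0*P1*P2*P3*Q2*Q3 + -t0*P1*P2*P3*Q1*Q3 + -t0*P1*P2*P3*Q0 + -t0*P1*P2*P3*Q0*Q3 + -(2%:R*t0*P1*P2*P3*P3) + -(2%:R*t0*P1*P2*P3*P3*Q3) + -t0*P1*P2*P3*P3*Q2 + -t0*P1*P2*P3*P3*Q1 + -t0*P1*P2*P3*P3*Q0 + -(2%:R*t0*P1*P2*P3*P3*P3) + -t0*P1*P2*P2 + -t0*P1*P2*P2*Q3 + -t0*P1*P2*P2*P3 + -(2%:R*t0*P1*P2*P2*P3*Q3) + -t0*P1*P2*P2*P3*P3 + -t0*P1*P2*P2*P3*P3*Q3 + -t0*P1*P2*P2*P3*P3*P3 + -t0*P0 + -(2%:R*t0*P0*Q3) + -t0*P0*Q3*Q3 + -t0*P0*Q2*Q3 + -t0*P0*P3 + -t0*P0*P3*P3 + -(2%:R*t0*P0*P3*P3*Q3) + -t0*P0*P3*P3*Q3*Q3 + -t0*P0*P3*P3*Q2*Q3 + -t0*P0*P3*P3*P3 + -(2%:R*t0*P0*P2) + -(3%:R*t0*P0*P2*Q3) + -t0*P0*P2*Q2 + -(2%:R*t0*P0*P2*P3) + -(3%:R*t0*P0*P2*P3*Q3) + -(2%:R*t0*P0*P2*P3*P3) + -(3%:R*t0*P0*P2*P3*P3*Q3) + -t0*P0*P2*P3*P3*Q2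 + -(2%:R*t0*P0*P2*P3*P3*P3) + -t0*P0*P2*P3*P3*P3*Q3 + -t0*P0*P2*P2 + -t0*P0*P2*P2*P3 + -t0*P0*P2*P2*P3*P3 + -t0*P0*P2*P2*P3*P3*P3 + -t0*P0*P1 + -(2%:R*t0*P0*P1*Q3) + -t0*P0*P1*P3 + -t0*P0*P1*P3*P3 + -(2%:R*t0*P0*P1*P3*P3*Q3) + -t0*P0*P1*P3*P3*P3 + -(2%:R*t0*P0*P1*P2) + -(2%:R*t0*P0*P1*P2*Q3) + -t0*P0*P1*P2*P3 + -(2%:R*t0*P0*P1*P2*P3*Q3) + -(2%:R*t0*P0*P1*P2*P3*P3) + -(2%:R*t0*P0*P1*P2*P3*P3*Q3) + -t0*P0*P1*P2*P3*P3*P3 + -t0*P0*P1*P2*P2 + -t0*P0*P1*P2*P2*P3*P3) by ring.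
by rewrite E h0 h1 h2 h3 h4 h5 h6 h7 h8 h9 h10 h11 two !(mulr0, mul0r, addr0).
Qed.

Lemma G2b1 (R : comRingType) (t0 P0 P1 P2 P3 Q0 Q1 Q2 Q3 : R) :
  1 + 1 = 0 :> R ->
  (1 + P2)*(P0*P1 + Q1 + P0) + P0*(P1*P2 + Q2 + P1) = 0 ->
  (1 + P3)*(P1*P2 + Q2 + P1) + P1*(P2*P3 + Q3 + P2) = 0 ->
  (1 + P0)*(P2*P3 + Q3 + P2) + P2*(P3*P0 + Q0 + P3) = 0 ->
  (1 + P1)*(P3*P0 + Q0 + P3) + P3*(P0*P1 + Q1 + P0) = 0 ->
  1 + (1 + P2)*((1 + Q1 + P1 + Q0) + P1*Q0) + (P1*P2 + Q2 + P1)*Q0 = 0 ->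
  1 + (1 + P3)*((1 + Q2 + P2 + Q1) + P2*Q1) + (P2*P3 + Q3 + P2)*Q1 = 0 ->
  1 + (1 + P0)*((1 + Q3 + P3 + Q2) + P3*Q2) + (P3*P0 + Q0 + P3)*Q2 = 0 ->
  1 + (1 + P1)*((1 + Q0 + P0 + Q3) + P0*Q3) + (P0*P1 + Q1 + P0)*Q3 = 0 ->
  t0*(P0*P1 + Q1 + P0) + 1 = 0 ->
  Q1 + Q0 = 0 ->
  Q2 + Q1 = 0 ->
  Q3 + Q2 = 0 ->
  P1 + P0 + 1 = 0.
Proof.
move=> two h0 h1 h2 h3 h4 h5 h6 h7 h8 h9 h10 h11.
have E : P1 + P0 + 1 = (1 + t0*Q3 + t0*P3*Q3 + t0*P2 + t0*P2*P3)*((1 + P2)*(P0*P1 + Q1 + P0) + P0*(P1*P2 + Q2 + P1)) + (1 + t0 + t0*P3 + t0*P2 + t0*P2*Q3 + t0*P2*P3)*((1 + P3)*(P1*P2 + Q2 + P1) + P1*(P2*P3 + Q3 + P2)) + (1 + t0 + t0*Q3 + t0*P3 + t0*P3*Q3 + t0*P2 + t0*P2*P3)*((1 + P0)*(P2*P3 + Q3 + P2) + P2*(P3*P0 + Q0 + P3)) + (1 + t0 + t0*P3 + t0*P2*Q3 + t0*P2*P3)*((1 + P1)*(P3*P0 + Q0 + P3) + P3*(P0*P1 + Q1 + P0)) + (0)*(1 + (1 + P2)*((1 + Q1 + P1 + Q0) + P1*Q0) + (P1*P2 + Q2 + P1)*Q0) + (t0 + t0*Q2 + t0*Q1 + t0*P3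 + t0*P2)*(1 + (1 + P3)*((1 + Q2 + P2 + Q1) + P2*Q1) + (P2*P3 + Q3 + P2)*Q1) + (0)*(1 + (1 + P0)*((1 + Q3 + P3 + Q2) + P3*Q2) + (P3*P0 + Q0 + P3)*Q2) + (t0 + t0*P3 + t0*P2)*(1 + (1 + P1)*((1 + Q0 + P0 + Q3) + P0*Q3) + (P0*P1 + Q1 + P0)*Q3) + (1 + P3 + P2)*(t0*(P0*P1 + Q1 + P0) + 1) + (1 + P2 + P1 + t0*P2*P3*Q3 + t0*P2*P2 + t0*P2*P2*P3 + t0*P1*P2 + t0*P1*P2*Q3 + t0*P1*P2*P3)*(Q1 + Q0) + (P3 + P1 + t0*Q3 + t0*Q2 + t0*Q1 + t0*Q1*Q3 + t0*P3 + t0*P3*Q3 + t0*P3*Q2 + t0*P3*Q1 + t0*P2*Q3 + t0*P2*P3 + t0*P2*P3*Q3 + t0*P2*P3*P3 + t0*P1*P2 + t0*P1*P2*Q3 + t0*P1*P2*P3)*(Q2 + Q1) + (1 + P1 + P0 + t0*Q3 + t0*P3*Q3 + t0*P2 + t0*P2*P3 + t0*P1*P2 + t0*P1*P2*Q3 + t0*P1*P2*P3 + t0*P0*Q3 + t0*P0*P3*Q3 + t0*P0*P2 + t0*P0*P2*P3)*(Q3 + Q2) + (1 + 1)*(-Q3 + -Q2 + -Q1 + -Q0 + -P3 + -P3*Q2 + -P3*Q1 + -P2 + -P2*Q1 + -P2*Q0 + -P2*P3 + -P1*Q3 + -P1*Q2 + -P1*Q1 + -P1*Q0 + -P1*P3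 + -P1*P2 + -P1*P2*P3 + -P0*Q3 + -P0*Q2 + -P0*P3 + -P0*P2 + -P0*P2*P3 + -P0*P1 + -P0*P1*P3 + -P0*P1*P2 + -(2%:R*t0) + -t0*Q3 + -t0*Q3*Q3 + -(2%:R*t0*Q2) + -t0*Q2*Q3 + -t0*Q2*Q2 + -(2%:R*t0*Q1) + -(2%:R*t0*Q1*Q3) + -(2%:R*t0*Q1*Q2) + -t0*Q1*Q2*Q3 + -t0*Q1*Q1 + -t0*Q1*Q1*Q3 + -t0*Q0 + -(3%:R*t0*P3) + -t0*P3*Q3 + -t0*P3*Q3*Q3 + -(3%:R*t0*P3*Q2) + -t0*P3*Q2*Q3 + -t0*P3*Q2*Q2 + -(3%:R*t0*P3*Q1) + -(2%:R*t0*P3*Q1*Q3) + -(2%:R*t0*P3*Q1*Q2) + -t0*P3*Q1*Q1 + -t0*P3*Q0 + -t0*P3*P3 + -t0*P3*P3*Q2 + -t0*P3*P3*Q1 + -(3%:R*t0*P2) + -(2%:R*t0*P2*Q3) + -(2%:R*t0*P2*Q2) + -t0*P2*Q2*Q3 + -(3%:R*t0*P2*Q1) + -(2%:R*t0*P2*Q1*Q3) + -t0*P2*Q1*Q2 + -t0*P2*Q1*Q1 + -t0*P2*Q0 + -t0*P2*Q0*Q3 + -(3%:R*t0*P2*P3) + -(3%:R*t0*P2*P3*Q3) + -(3%:R*t0*P2*P3*Q2) + -t0*P2*P3*Q2*Q3 + -(4%:R*t0*P2*P3*Q1) + -(2%:R*t0*P2*P3*Q1*Q3) + -t0*P2*P3*Q1*Q2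 + -t0*P2*P3*Q1*Q1 + -t0*P2*P3*Q0 + -t0*P2*P3*Q0*Q3 + -(2%:R*t0*P2*P3*P3) + -t0*P2*P3*P3*Q3 + -t0*P2*P3*P3*Q2 + -(2%:R*t0*P2*P3*P3*Q1) + -t0*P2*P2 + -(2%:R*t0*P2*P2*Q1) + -t0*P2*P2*Q0 + -(2%:R*t0*P2*P2*P3) + -(2%:R*t0*P2*P2*P3*Q1) + -t0*P2*P2*P3*Q0 + -t0*P2*P2*P3*P3 + -t0*P1 + -t0*P1*Q3 + -t0*P1*Q0 + -(2%:R*t0*P1*P3) + -t0*P1*P3*Q3 + -t0*P1*P3*Q0 + -t0*P1*P3*P3 + -(2%:R*t0*P1*P2) + -(2%:R*t0*P1*P2*Q3) + -t0*P1*P2*Q3*Q3 + -t0*P1*P2*Q2 + -t0*P1*P2*Q2*Q3 + -t0*P1*P2*Q1 + -t0*P1*P2*Q1*Q3 + -t0*P1*P2*Q0 + -t0*P1*P2*Q0*Q3 + -(3%:R*t0*P1*P2*P3) + -(2%:R*t0*P1*P2*P3*Q3) + -t0*P1*P2*P3*Q2 + -t0*P1*P2*P3*Q1 + -t0*P1*P2*P3*Q0 + -(2%:R*t0*P1*P2*P3*P3) + -t0*P1*P2*P2 + -t0*P1*P2*P2*Q3 + -(2%:R*t0*P1*P2*P2*P3) + -t0*P1*P2*P2*P3*Q3 + -t0*P1*P2*P2*P3*P3 + -t0*P0 + -(2%:R*t0*P0*Q3) + -t0*P0*Q3*Q3 + -t0*P0*Q2*Q3 + -(2%:R*t0*P0*P3)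 + -(2%:R*t0*P0*P3*Q3) + -t0*P0*P3*Q3*Q3 + -t0*P0*P3*Q2*Q3 + -t0*P0*P3*P3 + -(2%:R*t0*P0*P2) + -(3%:R*t0*P0*P2*Q3) + -t0*P0*P2*Q2 + -(2%:R*t0*P0*P2*P3) + -(4%:R*t0*P0*P2*P3*Q3) + -t0*P0*P2*P3*Q2 + -(2%:R*t0*P0*P2*P3*P3) + -t0*P0*P2*P3*P3*Q3 + -t0*P0*P2*P2 + -(2%:R*t0*P0*P2*P2*P3) + -t0*P0*P2*P2*P3*P3 + -t0*P0*P1 + -(2%:R*t0*P0*P1*Q3) + -(2%:R*t0*P0*P1*P3) + -(2%:R*t0*P0*P1*P3*Q3) + -t0*P0*P1*P3*P3 + -(2%:R*t0*P0*P1*P2) + -(2%:R*t0*P0*P1*P2*Q3) + -t0*P0*P1*P2*P3 + -(2%:R*t0*P0*P1*P2*P3*Q3) + -t0*P0*P1*P2*P3*P3 + -t0*P0*P1*P2*P2 + -t0*P0*P1*P2*P2*P3) by ring.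
by rewrite E h0 h1 h2 h3 h4 h5 h6 h7 h8 h9 h10 h11 two !(mulr0, mul0r, addr0).
Qed.

Lemma G2b2 (R : comRingType) (t0 P0 P1 P2 P3 Q0 Q1 Q2 Q3 : R) :
  1 + 1 = 0 :> R ->
  (1 + P2)*(P0*P1 + Q1 + P0) + P0*(P1*P2 + Q2 + P1) = 0 ->
  (1 + P3)*(P1*P2 + Q2 + P1) + P1*(P2*P3 + Q3 + P2) = 0 ->
  (1 + P0)*(P2*P3 + Q3 + P2) + P2*(P3*P0 + Q0 + P3) = 0 ->
  (1 + P1)*(P3*P0 + Q0 + P3) + P3*(P0*P1 + Q1 + P0) = 0 ->
  1 + (1 + P2)*((1 + Q1 + P1 + Q0) + P1*Q0) + (P1*P2 + Q2 + P1)*Q0 = 0 ->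
  1 + (1 + P3)*((1 + Q2 + P2 + Q1) + P2*Q1) + (P2*P3 + Q3 + P2)*Q1 = 0 ->
  1 + (1 + P0)*((1 + Q3 + P3 + Q2) + P3*Q2) + (P3*P0 + Q0 + P3)*Q2 = 0 ->
  1 + (1 + P1)*((1 + Q0 + P0 + Q3) + P0*Q3) + (P0*P1 + Q1 + P0)*Q3 = 0 ->
  t0*(P0*P1 + Q1 + P0) + 1 = 0 ->
  Q1 + Q0 = 0 ->
  Q2 + Q1 = 0 ->
  Q3 + Q2 = 0 ->
  P0*P0 + P0 + Q0 = 0.
Proof.
move=> two h0 h1 h2 h3 h4 h5 h6 h7 h8 h9 h10 h11.
have E : P0*P0 + P0 + Q0 = (1 + Q3 + P0)*((1 + P2)*(P0*P1 + Q1 + P0) + P0*(P1*P2 + Q2 + P1)) + (0)*((1 + P3)*(P1*P2 + Q2 + P1) + P1*(P2*P3 + Q3 + P2)) + (Q3 + P0)*((1 + P0)*(P2*P3 + Q3 + P2) + P2*(P3*P0 + Q0 + P3)) + (0)*((1 + P1)*(P3*P0 + Q0 + P3) + P3*(P0*P1 + Q1 + P0)) + (0)*(1 + (1 + P2)*((1 + Q1 + P1 + Q0) + P1*Q0) + (P1*P2 + Q2 + P1)*Q0) + (0)*(1 + (1 + P3)*((1 + Q2 + P2 + Q1) + P2*Q1) + (P2*P3 + Q3 + P2)*Q1) + (0)*(1 + (1 + P0)*((1 + Q3 + P3 + Q2) + P3*Q2) + (P3*P0 + Q0 + P3)*Q2) + (0)*(1 + (1 + P1)*((1 + Q0 + P0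 + Q3) + P0*Q3) + (P0*P1 + Q1 + P0)*Q3) + (0)*(t0*(P0*P1 + Q1 + P0) + 1) + (1 + P2*Q3 + P0*P2)*(Q1 + Q0) + (Q3 + P2 + P0)*(Q2 + Q1) + (Q3 + P2 + P0*Q3 + P0*P0)*(Q3 + Q2) + (1 + 1)*(-Q3*Q3 + -Q2*Q3 + -Q1 + -Q1*Q3 + -P2*Q3 + -P2*Q2 + -P2*Q1 + -P2*Q1*Q3 + -P2*Q0*Q3 + -P2*P3*Q3 + -P0*Q3 + -P0*Q3*Q3 + -P0*Q2 + -P0*Q2*Q3 + -P0*Q1 + -P0*P2 + -P0*P2*Q3 + -P0*P2*Q1 + -P0*P2*Q0 + -P0*P2*P3 + -P0*P2*P3*Q3 + -P0*P1 + -P0*P1*Q3 + -P0*P1*P2 + -P0*P1*P2*Q3 + -P0*P0*Q3 + -P0*P0*Q2 + -P0*P0*P2 + -P0*P0*P2*P3 + -P0*P0*P1 + -P0*P0*P1*P2) by ring.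
by rewrite E h0 h1 h2 h3 h4 h5 h6 h7 h8 h9 h10 h11 two !(mulr0, mul0r, addr0).
Qed.
Lemma DEG (R : comRingType) (A0 A1 A2 A3 B0 B1 B2 B3 C0 C1 C2 C3 D0 D1 D2 D3 t0 t1 t2 t3 : R) :
  1 + 1 = 0 :> R ->
  (((B0 + D0)*(B1 + D1) + B0) + (B0 + D0)*((B1 + D1)*(B2 + D2) + B1)*(A0 + (B1 + D1)*(A0 + C0)) + ((B0 + D0)*(B1 + D1) + B0)*((B1 + D1)*(B2 + D2) + B1)*(A0 + C0)) = 0 ->
  (((B0 + D0)*(B1 + D1) + B0)*(A1 + (B2 + D2)*(A1 + C1)) + (B0 + D0)*((B1 + D1)*(B2 + D2) + B1)*(1 + (A1 + C1) + (B1 + D1)) + ((B0 + D0)*(B1 + D1) + B0)*((B1 + D1)*(B2 + D2) + B1)) = 0 ->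
  (((B0 + D0)*(B1 + D1) + B0)*(1 + (A2 + C2) + (B2 + D2)) + (B0 + D0)*((B1 + D1)*(B2 + D2) + B1)*(1 + (B1 + D1)) + ((B0 + D0)*(B1 + D1) + B0)*((B1 + D1)*(B2 + D2) + B1)) = 0 ->
  (((B0 + D0)*(B1 + D1) + B0)*(1 + (B2 + D2)) + (B0 + D0)*((B1 + D1)*(B2 + D2) + B1)) = 0 ->
  t0*((B0 + D0)*(B1 + D1) + B0) + 1 = 0 ->
  (((B1 + D1)*(B2 + D2) + B1) + (B1 + D1)*((B2 + D2)*(B3 + D3) + B2)*(A1 + (B2 + D2)*(A1 + C1)) + ((B1 + D1)*(B2 + D2) + B1)*((B2 + D2)*(B3 + D3) + B2)*(A1 + C1)) = 0 ->
  (((B1 + D1)*(B2 + D2) + B1)*(A2 + (B3 + D3)*(A2 + C2)) + (B1 + D1)*((B2 + D2)*(B3 + D3) + B2)*(1 + (A2 + C2) + (B2 + D2)) + ((B1 + D1)*(B2 + D2) + B1)*((B2 + D2)*(B3 + D3) + B2)) = 0 ->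
  (((B1 + D1)*(B2 + D2) + B1)*(1 + (A3 + C3) + (B3 + D3)) + (B1 + D1)*((B2 + D2)*(B3 + D3) + B2)*(1 + (B2 + D2)) + ((B1 + D1)*(B2 + D2) + B1)*((B2 + D2)*(B3 + D3) + B2)) = 0 ->
  (((B1 + D1)*(B2 + D2) + B1)*(1 + (B3 + D3)) + (B1 + D1)*((B2 + D2)*(B3 + D3) + B2)) = 0 ->
  t1*((B1 + D1)*(B2 + D2) + B1) + 1 = 0 ->
  (((B2 + D2)*(B3 + D3) + B2) + (B2 + D2)*((B3 + D3)*(B0 + D0) + B3)*(A2 + (B3 + D3)*(A2 + C2)) + ((B2 + D2)*(B3 + D3) + B2)*((B3 + D3)*(B0 + D0) + B3)*(A2 + C2)) = 0 ->
  (((B2 + D2)*(B3 + D3) + B2)*(A3 + (B0 + D0)*(A3 + C3)) + (B2 + D2)*((B3 + D3)*(B0 + D0) + B3)*(1 + (A3 + C3) + (B3 + D3)) + ((B2 + D2)*(B3 + D3) + B2)*((B3 + D3)*(B0 + D0) + B3)) = 0 ->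
  (((B2 + D2)*(B3 + D3) + B2)*(1 + (A0 + C0) + (B0 + D0)) + (B2 + D2)*((B3 + D3)*(B0 + D0) + B3)*(1 + (B3 + D3)) + ((B2 + D2)*(B3 + D3) + B2)*((B3 + D3)*(B0 + D0) + B3)) = 0 ->
  (((B2 + D2)*(B3 + D3) + B2)*(1 + (B0 + D0)) + (B2 + D2)*((B3 + D3)*(B0 + D0) + B3)) = 0 ->
  t2*((B2 + D2)*(B3 + D3) + B2) + 1 = 0 ->
  (((B3 + D3)*(B0 + D0) + B3) + (B3 + D3)*((B0 + D0)*(B1 + D1) + B0)*(A3 + (B0 + D0)*(A3 + C3)) + ((B3 + D3)*(B0 + D0) + B3)*((B0 + D0)*(B1 + D1) + B0)*(A3 + C3)) = 0 ->
  (((B3 + D3)*(B0 + D0) + B3)*(A0 + (B1 + D1)*(A0 + C0)) + (B3 + D3)*((B0 + D0)*(B1 + D1) + B0)*(1 + (A0 + C0) + (B0 + D0)) + ((B3 + D3)*(B0 + D0) + B3)*((B0 + D0)*(B1 + D1) + B0)) = 0 ->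
  (((B3 + D3)*(B0 + D0) + B3)*(1 + (A1 + C1) + (B1 + D1)) + (B3 + D3)*((B0 + D0)*(B1 + D1) + B0)*(1 + (B0 + D0)) + ((B3 + D3)*(B0 + D0) + B3)*((B0 + D0)*(B1 + D1) + B0)) = 0 ->
  (((B3 + D3)*(B0 + D0) + B3)*(1 + (B1 + D1)) + (B3 + D3)*((B0 + D0)*(B1 + D1) + B0)) = 0 ->
  t3*((B3 + D3)*(B0 + D0) + B3) + 1 = 0 ->
  [/\ (A1 + C1) + (A0 + C0) = 0, (A0 + C0)*(A0 + C0) + (A0 + C0) + 1 = 0, (B1 + D1) + (B0 + D0) + 1 = 0 & (B0 + D0)*(B0 + D0) + (B0 + D0) + (A0 + C0) = 0].
Proof.
move=> two c0_0 c1_0 c2_0 c3_0 tk_0 c0_1 c1_1 c2_1 c3_1 tk_1 c0_2 c1_2 c2_2 c3_2 tk_2 c0_3 c1_3 c2_3 c3_3 tk_3.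
have Da_0 := @Da R A1 A2 B0 B1 B2 C1 C2 D0 D1 D2 t0 two c1_0 c2_0 c3_0 tk_0.
have Db_0 := @Db R A2 B0 B1 B2 C2 D0 D1 D2 t0 two c2_0 c3_0 tk_0.
have Dd_0 := @Dd R A0 B0 B1 B2 C0 D0 D1 D2 t0 two c0_0 c3_0 tk_0.
have Da_1 := @Da R A2 A3 B1 B2 B3 C2 C3 D1 D2 D3 t1 two c1_1 c2_1 c3_1 tk_1.
have Db_1 := @Db R A3 B1 B2 B3 C3 D1 D2 D3 t1 two c2_1 c3_1 tk_1.
have Dd_1 := @Dd R A1 B1 B2 B3 C1 D1 D2 D3 t1 two c0_1 c3_1 tk_1.
have Da_2 := @Da R A3 A0 B2 B3 B0 C3 C0 D2 D3 D0 t2 two c1_2 c2_2 c3_2 tk_2.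
have Db_2 := @Db R A0 B2 B3 B0 C0 D2 D3 D0 t2 two c2_2 c3_2 tk_2.
have Dd_2 := @Dd R A2 B2 B3 B0 C2 D2 D3 D0 t2 two c0_2 c3_2 tk_2.
have Da_3 := @Da R A0 A1 B3 B0 B1 C0 C1 D3 D0 D1 t3 two c1_3 c2_3 c3_3 tk_3.
have Db_3 := @Db R A1 B3 B0 B1 C1 D3 D0 D1 t3 two c2_3 c3_3 tk_3.
have Dd_3 := @Dd R A3 B3 B0 B1 C3 D3 D0 D1 t3 two c0_3 c3_3 tk_3.
have DE1_0 := @DE1 R A1 A2 B0 B1 B2 C1 C2 D0 D1 D2 two c3_0 Db_3 Db_0.
have DE2_0 := @DE2 R A0 A1 A2 B1 B2 C0 C1 C2 D1 D2 two Dd_0 Da_3 Db_0.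
have Dtk_0 := @Dtk R A1 B0 B1 C1 D0 D1 t0 two tk_0 Db_3.
have DE1_1 := @DE1 R A2 A3 B1 B2 B3 C2 C3 D1 D2 D3 two c3_1 Db_0 Db_1.
have DE2_1 := @DE2 R A1 A2 A3 B2 B3 C1 C2 C3 D2 D3 two Dd_1 Da_0 Db_1.
have Dtk_1 := @Dtk R A2 B1 B2 C2 D1 D2 t1 two tk_1 Db_0.
have DE1_2 := @DE1 R A3 A0 B2 B3 B0 C3 C0 D2 D3 D0 two c3_2 Db_1 Db_2.
have DE2_2 := @DE2 R A2 A3 A0 B3 B0 C2 C3 C0 D3 D0 two Dd_2 Da_1 Db_2.
have Dtk_2 := @Dtk R A3 B2 B3 C3 D2 D3 t2 two tk_2 Db_1.
have DE1_3 := @DE1 R A0 A1 B3 B0 B1 C0 C1 D3 D0 D1 two c3_3 Db_2 Db_3.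
have DE2_3 := @DE2 R A3 A0 A1 B0 B1 C3 C0 C1 D0 D1 two Dd_3 Da_2 Db_3.
have Dtk_3 := @Dtk R A0 B3 B0 C0 D3 D0 t3 two tk_3 Db_2.
have G2a_0 := @G2a R t0 ((B0 + D0)) ((B1 + D1)) ((B2 + D2)) ((B3 + D3)) ((A0 + C0)) ((A1 + C1)) ((A2 + C2)) ((A3 + C3)) two DE1_0 DE1_1 DE1_2 DE1_3 DE2_0 DE2_1 DE2_2 DE2_3 Dtk_0.
have G2a_1 := @G2a R t1 ((B1 + D1)) ((B2 + D2)) ((B3 + D3)) ((B0 + D0)) ((A1 + C1)) ((A2 + C2)) ((A3 + C3)) ((A0 + C0)) two DE1_1 DE1_2 DE1_3 DE1_0 DE2_1 DE2_2 DE2_3 DE2_0 Dtk_1.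
have G2a_2 := @G2a R t2 ((B2 + D2)) ((B3 + D3)) ((B0 + D0)) ((B1 + D1)) ((A2 + C2)) ((A3 + C3)) ((A0 + C0)) ((A1 + C1)) two DE1_2 DE1_3 DE1_0 DE1_1 DE2_2 DE2_3 DE2_0 DE2_1 Dtk_2.
have G2a_3 := @G2a R t3 ((B3 + D3)) ((B0 + D0)) ((B1 + D1)) ((B2 + D2)) ((A3 + C3)) ((A0 + C0)) ((A1 + C1)) ((A2 + C2)) two DE1_3 DE1_0 DE1_1 DE1_2 DE2_3 DE2_0 DE2_1 DE2_2 Dtk_3.
have G2b0 := @G2b0 R t0 ((B0 + D0)) ((B1 + D1)) ((B2 + D2)) ((B3 + D3)) ((A0 + C0)) ((A1 + C1)) ((A2 + C2)) ((A3 + C3)) two DE1_0 DE1_1 DE1_2 DE1_3 DE2_0 DE2_1 DE2_2 DE2_3 Dtk_0 G2a_0 G2a_1 G2a_2.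
have G2b1 := @G2b1 R t0 ((B0 + D0)) ((B1 + D1)) ((B2 + D2)) ((B3 + D3)) ((A0 + C0)) ((A1 + C1)) ((A2 + C2)) ((A3 + C3)) two DE1_0 DE1_1 DE1_2 DE1_3 DE2_0 DE2_1 DE2_2 DE2_3 Dtk_0 G2a_0 G2a_1 G2a_2.
have G2b2 := @G2b2 R t0 ((B0 + D0)) ((B1 + D1)) ((B2 + D2)) ((B3 + D3)) ((A0 + C0)) ((A1 + C1)) ((A2 + C2)) ((A3 + C3)) two DE1_0 DE1_1 DE1_2 DE1_3 DE2_0 DE2_1 DE2_2 DE2_3 Dtk_0 G2a_0 G2a_1 G2a_2.
by split.
Qed.

Theorem proposition4p2 (h : nat) (F : finFieldType)
  (hh : (h %% 4 != 2)%N) (hF : #|F| = ((2 ^ h) ^ 4)%N)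
  (A B C D : F) (hB : B ^+ ((2 ^ h) ^ 2 + 1) != 1) :
  (#|Lambda (2 ^ h) A B C D| <= (2 ^ h) ^ 3)%N.
Proof.
have n1 : (1 : F) != 0 := oner_neq0 F.
have hpos : (0 < h)%N.
  case: h hh hF hB => // hh hF hB; exfalso.
  have := subset_leq_card (subsetT [set (0 : F); 1]).
  by rewrite cardsT cards2 eq_sym n1 hF.
have two : 1 + 1 = 0 :> F.
  have e := expf_card (-1 : F).
  move: e; rewrite -signr_odd hF !oddX /=.
  case: h hpos {hh hF hB} => // h' _ /= e.
  rewrite expr0 in e.
  by rewrite {1}e addNr.
have frD' := @frD F h two.
have frM' := @frM F h.
have fr1' := @fr1 F h.
have fr0' := @fr0 F h.
have fr4' := @fr4 F h hF.
have memL : forall u v, (u, v) \in Lambda (2 ^ h) A B C D ->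
    fr h (fr h v) + A * u + B * v + fr h u = 0 /\
    fr h (fr h v) + fr h (fr h u) + fr h v + C * u + D * v = 0.
  by move=> u v; rewrite inE /= !frsq => /andP[/eqP e1 /eqP e2]; split.
have inj : {in Lambda (2 ^ h) A B C D &, injective fst}.
  move=> [u v] [u' v'] /memL [e1 _] /memL [e1' _] /= eu; subst u'.
  congr (_, _).
  have ed : fr h (fr h (v + v')) + B * (v + v') = 0.
    rewrite !frD'.
    have -> : fr h (fr h v) + fr h (fr h v') + B * (v + v') =
      (fr h (fr h v) + A * u + B * v + fr h u) + (fr h (fr h v') + A * u + B * v' + fr h u)
      - (1 + 1) * (A * u + fr h u) by ring.
    by rewrite e1 e1' two mul0r addr0 subr0.
  have ed' := @c2eq F _ _ two ed.
  have := fr4' (v + v'); rewrite ed' !frM' ed'.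
  move=> e; apply: c2eq => //; apply/eqP; move: hB; apply: contraR => ne.
  have : (fr h (fr h B) * B - 1) * (v + v') = 0.
    by rewrite mulrBl mul1r -mulrA e subrr.
  move/eqP; rewrite mulf_eq0 (negbTE ne) orbF subr_eq0 => /eqP hb.
  by rewrite exprD expr1 frsq hb.
rewrite -(card_in_imset inj).
set S := fst @: _.
have hS : forall u, u \in S -> exists v, (u, v) \in Lambda (2 ^ h) A B C D.
  by move=> u /imsetP [[u' v] hx ->]; exists v.
case: (eqVneq (((B + D)*((fr h B) + (fr h D)) + B)) 0) => hk.
  apply: (@bound F h S (1) ((1 + ((fr h B) + (fr h D)))) ((1 + ((fr h A) + (fr h C)) + ((fr h B) + (fr h D)))) ((A + ((fr h B) + (fr h D))*(A + C))) hpos); first by rewrite oner_eq0.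
  move=> u /hS [v uv]; have [e1_0 e2_0] := memL _ _ uv.
have e1_1 := congr1 (fr h) e1_0; rewrite ?fr0' !(frD', frM', fr1', fr4') in e1_1.
have e2_1 := congr1 (fr h) e2_0; rewrite ?fr0' !(frD', frM', fr1', fr4') in e2_1.
have e1_2 := congr1 (fr h) e1_1; rewrite ?fr0' !(frD', frM', fr1', fr4') in e1_2.
have e2_2 := congr1 (fr h) e2_1; rewrite ?fr0' !(frD', frM', fr1', fr4') in e2_2.
  have := @S2_I0 F (u) ((fr h u)) ((fr h (fr h u))) ((fr h (fr h (fr h u)))) (v) ((fr h v)) ((fr h (fr h v))) ((fr h (fr h (fr h v)))) (A) ((fr h A)) (B) ((fr h B)) (C) ((fr h C)) (D) ((fr h D)) two e1_0 e2_0 e1_1 e2_1.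
  by rewrite hk mul0r add0r.
case: (boolP [&& (((B + D)*((fr h B) + (fr h D)) + B)*(1 + ((fr h (fr h B)) + (fr h (fr h D)))) + (B + D)*(((fr h B) + (fr h D))*((fr h (fr h B)) + (fr h (fr h D))) + (fr h B))) == 0, (((B + D)*((fr h B) + (fr h D)) + B)*(1 + ((fr h (fr h A)) + (fr h (fr h C))) + ((fr h (fr h B)) + (fr h (fr h D)))) + (B + D)*(((fr h B) + (fr h D))*((fr h (fr h B)) + (fr h (fr h D))) + (fr h B))*(1 + ((fr h B) + (fr h D))) + ((B + D)*((fr h B) + (fr h D)) + B)*(((fr h B) + (fr h D))*((fr h (fr h B)) + (fr h (fr h D))) + (fr h B))) == 0, (((B + D)*((fr h B) + (fr h D)) + B)*((fr h A) + ((fr h (fr h B)) + (fr h (fr h D)))*((fr h A) + (fr h C))) + (B + D)*(((fr h B) + (fr h D))*((fr h (fr h B)) + (fr h (fr h D))) + (fr h B))*(1 + ((fr h A) + (fr h C)) + ((fr h B) + (fr h D))) + ((B + D)*((fr h B) + (fr h D)) + B)*(((fr h B) + (fr h D))*((fr h (fr h B)) + (fr h (fr h D))) + (fr h B))) == 0 & (((B + D)*((fr h B) + (fr h D)) + B) + (B + D)*(((fr h B) + (fr h D))*((fr h (fr h B)) + (fr h (fr h D))) + (fr h B))*(A + ((fr h B) + (fr h D))*(A + C)) + ((B + D)*((fr h B) + (fr h D)) + B)*(((fr h B) + (fr h D))*((fr h (fr h B)) + (fr h (fr h D))) + (fr h B))*(A + C)) == 0]) => hc; last first.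
  apply: (@bound F h S ((((B + D)*((fr h B) + (fr h D)) + B)*(1 + ((fr h (fr h B)) + (fr h (fr h D)))) + (B + D)*(((fr h B) + (fr h D))*((fr h (fr h B)) + (fr h (fr h D))) + (fr h B)))) ((((B + D)*((fr h B) + (fr h D)) + B)*(1 + ((fr h (fr h A)) + (fr h (fr h C))) + ((fr h (fr h B)) + (fr h (fr h D)))) + (B + D)*(((fr h B) + (fr h D))*((fr h (fr h B)) + (fr h (fr h D))) + (fr h B))*(1 + ((fr h B) + (fr h D))) + ((B + D)*((fr h B) + (fr h D)) + B)*(((fr h B) + (fr h D))*((fr h (fr h B)) + (fr h (fr h D))) + (fr h B)))) ((((B + D)*((fr h B) + (fr h D)) + B)*((fr h A) + ((fr h (fr h B)) + (fr h (fr h D)))*((fr h A) + (fr h C))) + (B + D)*(((fr h B) + (fr h D))*((fr h (fr h B)) + (fr h (fr h D))) + (fr h B))*(1 + ((fr h A) + (fr h C)) + ((fr h B) + (fr h D))) + ((B + D)*((fr h B) + (fr h D)) + B)*(((fr h B) + (fr h D))*((fr h (fr h B)) + (fr h (fr h D))) + (fr h B)))) ((((B + D)*((fr h B) + (fr h D)) + B) + (B + D)*(((fr h B) + (fr h D))*((fr h (fr h B)) + (fr h (fr h D))) + (fr h B))*(A + ((fr h B) + (fr h D))*(A + C)) + ((B + D)*((fr h B) + (fr h D)) + B)*(((fr h B) + (fr h D))*((fr h (fr h B)) + (fr h (fr h D))) + (fr h B))*(A + C))) hpos hc).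
  move=> u /hS [v uv]; have [e1_0 e2_0] := memL _ _ uv.
have e1_1 := congr1 (fr h) e1_0; rewrite ?fr0' !(frD', frM', fr1', fr4') in e1_1.
have e2_1 := congr1 (fr h) e2_0; rewrite ?fr0' !(frD', frM', fr1', fr4') in e2_1.
have e1_2 := congr1 (fr h) e1_1; rewrite ?fr0' !(frD', frM', fr1', fr4') in e1_2.
have e2_2 := congr1 (fr h) e2_1; rewrite ?fr0' !(frD', frM', fr1', fr4') in e2_2.
  exact: (@S2_Psi F (u) ((fr h u)) ((fr h (fr h u))) ((fr h (fr h (fr h u)))) (v) ((fr h v)) ((fr h (fr h v))) ((fr h (fr h (fr h v)))) (A) ((fr h A)) ((fr h (fr h A))) (B) ((fr h B)) ((fr h (fr h B))) (C) ((fr h C)) ((fr h (fr h C))) (D) ((fr h D)) ((fr h (fr h D))) two e1_0 e2_0 e1_1 e2_1 e1_2 e2_2).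
exfalso.
move: hc => /and4P [/eqP c3_0 /eqP c2_0 /eqP c1_0 /eqP c0_0].
pose t := (((B + D)*((fr h B) + (fr h D)) + B))^-1.
have tk_0 : t * (((B + D)*((fr h B) + (fr h D)) + B)) + 1 = 0 by rewrite /t mulVf // two.
have c0_1 := congr1 (fr h) c0_0; rewrite ?fr0' !(frD', frM', fr1', fr4') in c0_1.
have c1_1 := congr1 (fr h) c1_0; rewrite ?fr0' !(frD', frM', fr1', fr4') in c1_1.
have c2_1 := congr1 (fr h) c2_0; rewrite ?fr0' !(frD', frM', fr1', fr4') in c2_1.
have c3_1 := congr1 (fr h) c3_0; rewrite ?fr0' !(frD', frM', fr1', fr4') in c3_1.
have tk_1 := congr1 (fr h) tk_0; rewrite ?fr0' !(frD', frM', fr1', fr4') in tk_1.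
have c0_2 := congr1 (fr h) c0_1; rewrite ?fr0' !(frD', frM', fr1', fr4') in c0_2.
have c1_2 := congr1 (fr h) c1_1; rewrite ?fr0' !(frD', frM', fr1', fr4') in c1_2.
have c2_2 := congr1 (fr h) c2_1; rewrite ?fr0' !(frD', frM', fr1', fr4') in c2_2.
have c3_2 := congr1 (fr h) c3_1; rewrite ?fr0' !(frD', frM', fr1', fr4') in c3_2.
have tk_2 := congr1 (fr h) tk_1; rewrite ?fr0' !(frD', frM', fr1', fr4') in tk_2.
have c0_3 := congr1 (fr h) c0_2; rewrite ?fr0' !(frD', frM', fr1', fr4') in c0_3.
have c1_3 := congr1 (fr h) c1_2; rewrite ?fr0' !(frD', frM', fr1', fr4') in c1_3.
have c2_3 := congr1 (fr h) c2_2; rewrite ?fr0' !(frD', frM', fr1', fr4') in c2_3.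
have c3_3 := congr1 (fr h) c3_2; rewrite ?fr0' !(frD', frM', fr1', fr4') in c3_3.
have tk_3 := congr1 (fr h) tk_2; rewrite ?fr0' !(frD', frM', fr1', fr4') in tk_3.
have [q1 q2 p1 p2] := @DEG F (A) ((fr h A)) ((fr h (fr h A))) ((fr h (fr h (fr h A)))) (B) ((fr h B)) ((fr h (fr h B))) ((fr h (fr h (fr h B)))) (C) ((fr h C)) ((fr h (fr h C))) ((fr h (fr h (fr h C)))) (D) ((fr h D)) ((fr h (fr h D))) ((fr h (fr h (fr h D)))) (t) ((fr h t)) ((fr h (fr h t))) ((fr h (fr h (fr h t)))) two c0_0 c1_0 c2_0 c3_0 tk_0 c0_1 c1_1 c2_1 c3_1 tk_1 c0_2 c1_2 c2_2 c3_2 tk_2 c0_3 c1_3 c2_3 c3_3 tk_3.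
apply: (@hcontra F h (A + C) (B + D) hh two n1); rewrite ?frD' //.
Qed.
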